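(* For each $n\in\mathbb{N}$ and $r\in(0,+\infty]$, the continuous $\mathcal{O}(\mathbb{C}^\times)$-algebra homomorphism $\mathcal{O}_{\mathrm{def}}(\mathbb{D}_r^n)\to\mathcal{O}^T_{\mathrm{def}}(\mathbb{D}_r^n)$ induced by the inclusion $\mathcal{F}(\mathbb{D}_r^n)\subset\mathcal{F}^T(\mathbb{D}_r^n)$ (sending the class of $\zeta_i$ to the class of $\zeta_i$ and $z$ to $z$) is a topological isomorphism.
   Context: $\mathbb{C}^\times=\mathbb{C}\setminus\{0\}$; $\mathcal{O}(\mathbb{C}^\times)$ holomorphic functions on $\mathbb{C}^\times$, coordinate $z$. $W_n$: finite words $\alpha$ over $\{1,\dots,n\}$, length $|\alpha|$; $s(\alpha)$ is the number of $i$ with $\alpha_i\ne\alpha_{i+1}$ ($s(\alpha)=|\alpha|-1$ if $|\alpha|\le1$). $\mathcal{F}^T(\mathbb{D}_r^n)$: Fréchet algebra of series $\sum_\alpha c_\alpha\zeta_\alpha$ with $\sum|c_\alpha|\rho^{|\alpha|}<\infty$ for all $\rho\in(0,r)$; $\mathcal{F}(\mathbb{D}_r^n)$: those with $\sum|c_\alpha|\rho^{|\alpha|}\tau^{s(\alpha)+1}<\infty$ for all $\rho\in(0,r)$, $\tau\ge1$; both with concatenation product and topology from these norms (so $\mathcal{F}(\mathbb{D}_r^n)\subset\mathcal{F}^T(\mathbb{D}_r^n)$ continuously). For such $F$, $\mathcal{O}(\mathbb{C}^\times,F)\cong\mathcal{O}(\mathbb{C}^\times)\widehat\otimes F$; $\mathcal{O}_{\mathrm{def}}(\mathbb{D}_r^n)$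 and $\mathcal{O}^T_{\mathrm{def}}(\mathbb{D}_r^n)$ are the quotients of $\mathcal{O}(\mathbb{C}^\times,\mathcal{F}(\mathbb{D}_r^n))$ and $\mathcal{O}(\mathbb{C}^\times,\mathcal{F}^T(\mathbb{D}_r^n))$ by the closed two-sided ideals generated by $\zeta_i\zeta_j-z\zeta_j\zeta_i$ ($i<j$). *)

(* Defs.v *)
From Stdlib Require Import Reals ZArith List.
Open Scope R_scope.

Definition C := (R * R)%type.
Definition C0 : C := (0, 0).
Definition C1 : C := (1, 0).
Definition Cadd (x y : C) : C := (fst x + fst y, snd x + snd y).
Definition Copp (x : C) : C := (- fst x, - snd x).
Definition Csub (x y : C) : C := Cadd x (Copp y).
Definition Cmul (x y : C) : C :=
  (fst x * fst y - snd x * snd y, fst x * snd y + snd x * fst y).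
Definition Cnorm (x : C) : R := sqrt (fst x * fst x + snd x * snd x).

Definition CSeries (u : nat -> C) (L : C) : Prop :=
  infinite_sum (fun k => fst (u k)) (fst L) /\ infinite_sum (fun k => snd (u k)) (snd L).

Definition ZHasSum (f : Z -> C) (L : C) : Prop :=
  exists L1 L2, CSeries (fun k => f (Z.of_nat k)) L1 /\
                CSeries (fun k => f (- Z.of_nat (S k))%Z) L2 /\ L = Cadd L1 L2.

(** Words over {0,...,n-1} (letters shifted by one w.r.t. the paper). *)
Definition word := list nat.
Definition valid (n : nat) (a : word) : Prop := Forall (fun i => (i < n)%nat) a.

(** switches a = number of i with a_i <> a_{i+1}; splus1 a = s(a)+1
    (so splus1 [] = 0, splus1 [x] = 1, as in the paper's convention). *)
Fixpoint switches (a : word) : nat :=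
  match a with
  | x :: ((y :: _) as t) => ((if Nat.eq_dec x y then 0 else 1) + switches t)%nat
  | _ => 0%nat
  end.
Definition splus1 (a : word) : nat :=
  match a with nil => 0%nat | _ => S (switches a) end.

Fixpoint words (n m : nat) : list word :=
  match m with
  | O => nil :: nil
  | S m' => flat_map (fun i => map (cons i) (words n m')) (seq 0 n)
  end.

Definition sumR {A} (f : A -> R) (l : list A) : R := fold_right (fun x s => f x + s) 0 l.
Definition sumC {A} (f : A -> C) (l : list A) : C := fold_right (fun x s => Cadd (f x) s) C0 l.

(** Elements of O(C^x, F) are encoded by their coefficient families
    c k a  (coefficient of z^k zeta_a, k : Z). *)
Definition Coef := Z -> word -> C.
Definition czero : Coef := fun _ _ => C0.

(** Finite partial weighted l^1-sums: |k| <= N, |a| <= N. *)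
Definition PS (n : nat) (w : Z -> word -> R) (c : Coef) (N : nat) : R :=
  sumR (fun k => sumR (fun m => sumR (fun a => Cnorm (c k a) * w k a) (words n m))
                      (seq 0 (S N)))
       (map (fun i => (Z.of_nat i - Z.of_nat N)%Z) (seq 0 (S (2 * N)))).

(** Radius r in (0,+oo]: None stands for +oo. *)
Definition ltr (r : option R) (s : R) : Prop :=
  match r with Some r' => s < r' | None => True end.

(** Seminorm parameters p = (rho, sigma, tau).  The Laurent factor is rho^|k|
    with rho >= 1 (equivalent, directed, family to sum_k |a_k| rho^k, rho>0). *)
Definition param := (R * R * R)%type.
Definition adm (r : option R) (p : param) : Prop :=
  let '(rho, sg, tau) := p in 1 <= rho /\ 0 < sg /\ ltr r sg /\ 1 <= tau.

(** weights for O(C^x, F(D_r^n)) *)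
Definition wF (p : param) (k : Z) (a : word) : R :=
  let '(rho, sg, tau) := p in rho ^ Z.abs_nat k * sg ^ length a * tau ^ splus1 a.
(** weights for O(C^x, F^T(D_r^n)) (tau unused) *)
Definition wFT (p : param) (k : Z) (a : word) : R :=
  let '(rho, sg, tau) := p in rho ^ Z.abs_nat k * sg ^ length a.

Definition InSp (n : nat) (r : option R) (W : param -> Z -> word -> R) (c : Coef) : Prop :=
  (forall k a, ~ valid n a -> c k a = C0) /\
  forall p, adm r p -> exists M, forall N, PS n (W p) c N <= M.

(** Product (Cauchy product in z, concatenation in words). *)
Definition IsProd (a b c : Coef) : Prop :=
  forall m g, ZHasSum (fun k => sumC (fun j =>
                   Cmul (a k (firstn j g)) (b (m - k)%Z (skipn j g))) (seq 0 (S (length g))))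
                 (c m g).

(** Generators zeta_i zeta_j - z zeta_j zeta_i. *)
Definition gen (i j : nat) : Coef := fun k a =>
  if andb (Z.eqb k 0) (if list_eq_dec Nat.eq_dec a (i :: j :: nil) then true else false) then C1
  else if andb (Z.eqb k 1) (if list_eq_dec Nat.eq_dec a (j :: i :: nil) then true else false) then Copp C1
  else C0.

(** Algebraic two-sided ideal generated by the gen i j (i<j<n) in the space. *)
Inductive InJ (n : nat) (r : option R) (W : param -> Z -> word -> R) : Coef -> Prop :=
| J0 : InJ n r W czero
| JS : forall x u v t w i j y,
    InJ n r W x -> InSp n r W u -> InSp n r W v -> (i < j)%nat -> (j < n)%nat ->
    IsProd u (gen i j) t -> IsProd t v w ->
    (forall k a, y k a = Cadd (x k a) (w k a)) -> InJ n r W y.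

Definition csub (x y : Coef) : Coef := fun k a => Csub (x k a) (y k a).
Definition cadd (x y : Coef) : Coef := fun k a => Cadd (x k a) (y k a).

(** Closure of that ideal (= closed two-sided ideal generated). *)
Definition InI (n : nat) (r : option R) (W : param -> Z -> word -> R) (c : Coef) : Prop :=
  InSp n r W c /\
  forall p, adm r p -> forall eps, 0 < eps ->
    exists y, InJ n r W y /\ forall N, PS n (W p) (csub c y) N <= eps.

(** "the quotient seminorm of the class of c for parameter p is <= M" *)
Definition QB (n : nat) (r : option R) (W : param -> Z -> word -> R)
    (p : param) (c : Coef) (M : R) : Prop :=
  forall eps, 0 < eps -> exists x, InI n r W x /\ forall N, PS n (W p) (cadd c x) N <= M + eps.

(* Main.v *)
From Stdlib Require Import Reals ZArith List Lia Lra Permutation ClassicalEpsilon FunctionalExtensionality Bool.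
From Coquelicot Require Complex.
Require Import Defs.
Open Scope R_scope.

Ltac cdestr := repeat match goal with x : C |- _ => destruct x end.
Lemma C_ext (x y : C) : fst x = fst y -> snd x = snd y -> x = y.
Proof. destruct x, y; simpl; intros; subst; auto. Qed.

Ltac ceq := unfold Csub, Cadd, Cmul, Copp, C0, C1; apply C_ext; simpl; ring.

Lemma Cnorm_Cmod x : Cnorm x = Complex.Cmod x.
Proof. unfold Cnorm, Complex.Cmod. f_equal. simpl. ring. Qed.

Lemma Cnorm_triangle x y : Cnorm (Cadd x y) <= Cnorm x + Cnorm y.
Proof. rewrite !Cnorm_Cmod. apply Complex.Cmod_triangle. Qed.

Lemma Cnorm_mul x y : Cnorm (Cmul x y) = Cnorm x * Cnorm y.
Proof. rewrite !Cnorm_Cmod. apply Complex.Cmod_mult. Qed.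

Lemma Cnorm_nonneg x : 0 <= Cnorm x.
Proof. unfold Cnorm. apply sqrt_pos. Qed.

Lemma Cnorm_C0 : Cnorm C0 = 0.
Proof. unfold Cnorm, C0; simpl. replace (0*0+0*0) with 0 by ring. apply sqrt_0. Qed.

Lemma Cnorm_opp x : Cnorm (Copp x) = Cnorm x.
Proof. unfold Cnorm, Copp; simpl. f_equal. ring. Qed.

Lemma Cnorm_sub x y : Cnorm (Csub x y) <= Cnorm x + Cnorm y.
Proof. unfold Csub. rewrite <- (Cnorm_opp y). apply Cnorm_triangle. Qed.

Lemma Cnorm_fst x : Rabs (fst x) <= Cnorm x.
Proof.
  unfold Cnorm. rewrite <- sqrt_Rsqr_abs. apply sqrt_le_1_alt.
  unfold Rsqr. pose proof (Rle_0_sqr (snd x)). unfold Rsqr in H. lra.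
Qed.

Lemma Cnorm_snd x : Rabs (snd x) <= Cnorm x.
Proof.
  unfold Cnorm. rewrite <- sqrt_Rsqr_abs. apply sqrt_le_1_alt.
  unfold Rsqr. pose proof (Rle_0_sqr (fst x)). unfold Rsqr in H. lra.
Qed.

Lemma Cnorm_zero x : Cnorm x <= 0 -> x = C0.
Proof.
  intros H. pose proof (Cnorm_fst x). pose proof (Cnorm_snd x).
  pose proof (Rabs_pos (fst x)). pose proof (Rabs_pos (snd x)).
  apply C_ext; simpl.
  - destruct (Req_dec (fst x) 0); auto. apply Rabs_no_R0 in H4. lra.
  - destruct (Req_dec (snd x) 0); auto. apply Rabs_no_R0 in H4. lra.
Qed.

Lemma Cnorm_C1 : Cnorm C1 = 1.
Proof. unfold Cnorm, C1; simpl. replace (1*1+0*0) with 1 by ring. apply sqrt_1. Qed.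

Section Sums.
Context {A : Type}.

Lemma sumR_nil (f : A -> R) : sumR f nil = 0.
Proof. reflexivity. Qed.
Lemma sumR_cons (f : A -> R) x l : sumR f (x :: l) = f x + sumR f l.
Proof. reflexivity. Qed.

Lemma sumR_app (f : A -> R) l1 l2 : sumR f (l1 ++ l2) = sumR f l1 + sumR f l2.
Proof. induction l1; simpl; [ring|rewrite IHl1; ring]. Qed.

Lemma sumR_ext (f g : A -> R) l : (forall x, In x l -> f x = g x) -> sumR f l = sumR g l.
Proof. induction l; simpl; intros; auto. rewrite H, IHl; auto. Qed.

Lemma sumR_plus (f g : A -> R) l : sumR (fun x => f x + g x) l = sumR f l + sumR g l.
Proof. induction l; simpl; [ring|rewrite IHl; ring]. Qed.

Lemma sumR_minus (f g : A -> R) l : sumR (fun x => f x - g x) l = sumR f l - sumR g l.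
Proof. induction l; simpl; [ring|rewrite IHl; ring]. Qed.

Lemma sumR_scal (c : R) (f : A -> R) l : sumR (fun x => c * f x) l = c * sumR f l.
Proof. induction l; simpl; [ring|rewrite IHl; ring]. Qed.

Lemma sumR_zero (f : A -> R) l : (forall x, In x l -> f x = 0) -> sumR f l = 0.
Proof. induction l; simpl; intros; auto. rewrite H, IHl; auto. ring. Qed.

Lemma sumR_le (f g : A -> R) l : (forall x, In x l -> f x <= g x) -> sumR f l <= sumR g l.
Proof. induction l; simpl; intros; [lra|]. pose proof (H a (or_introl eq_refl)). pose proof (IHl (fun x h => H x (or_intror h))). lra. Qed.

Lemma sumR_nonneg (f : A -> R) l : (forall x, In x l -> 0 <= f x) -> 0 <= sumR f l.
Proof. intros. rewrite <- (sumR_zero (fun _ => 0) l) by auto. apply sumR_le; auto. Qed.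

Lemma sumR_perm (f : A -> R) l l' : Permutation l l' -> sumR f l = sumR f l'.
Proof. induction 1; simpl; try lra. Qed.

Lemma sumR_abs (f : A -> R) l : Rabs (sumR f l) <= sumR (fun x => Rabs (f x)) l.
Proof. induction l; simpl. rewrite Rabs_R0; lra. eapply Rle_trans. apply Rabs_triang. lra. Qed.

Lemma sumR_single (f : A -> R) l z : NoDup l -> In z l -> (forall x, In x l -> x <> z -> f x = 0) -> sumR f l = f z.
Proof.
  induction l; simpl; intros Hn Hi H; [contradiction|].
  inversion Hn; subst. destruct Hi as [<-|Hi].
  - rewrite sumR_zero; [ring|]. intros x Hx. apply H; auto. intros ->; contradiction.
  - rewrite IHl; auto. rewrite H; auto. ring. intros ->; contradiction.
Qed.

Lemma sumR_single_out (f : A -> R) l z : ~ In z l -> (forall x, In x l -> x <> z -> f x = 0) -> sumR f l = 0.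
Proof. intros Hi H. apply sumR_zero. intros x Hx. apply H; auto. intros ->; contradiction. Qed.

Lemma sumR_single_term (f : A -> R) l z : In z l -> (forall x, In x l -> 0 <= f x) -> f z <= sumR f l.
Proof.
  induction l; simpl; intros Hi H; [contradiction|].
  destruct Hi as [<-|Hi].
  - pose proof (sumR_nonneg f l (fun x h => H x (or_intror h))). lra.
  - pose proof (IHl Hi (fun x h => H x (or_intror h))). pose proof (H a (or_introl eq_refl)). lra.
Qed.

End Sums.

Lemma sumR_map {A B} (f : B -> R) (g : A -> B) l : sumR f (map g l) = sumR (fun x => f (g x)) l.
Proof. induction l; simpl; auto. rewrite IHl; auto. Qed.

Lemma sumR_flat_map {A B} (f : B -> R) (g : A -> list B) l :
  sumR f (flat_map g l) = sumR (fun x => sumR f (g x)) l.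
Proof. induction l; simpl; auto. rewrite sumR_app, IHl; auto. Qed.

Lemma sumR_swap {A B} (F : A -> B -> R) l1 l2 :
  sumR (fun x => sumR (fun y => F x y) l2) l1 = sumR (fun y => sumR (fun x => F x y) l1) l2.
Proof.
  induction l1; simpl. rewrite sumR_zero; auto.
  rewrite IHl1. rewrite <- sumR_plus. auto.
Qed.

Lemma sumC_fst {A} (f : A -> C) l : fst (sumC f l) = sumR (fun x => fst (f x)) l.
Proof. induction l; simpl; auto. rewrite IHl; auto. Qed.
Lemma sumC_snd {A} (f : A -> C) l : snd (sumC f l) = sumR (fun x => snd (f x)) l.
Proof. induction l; simpl; auto. rewrite IHl; auto. Qed.

Ltac csum := apply C_ext; rewrite ?sumC_fst, ?sumC_snd; simpl; rewrite ?sumC_fst, ?sumC_snd.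

Lemma sumC_ext {A} (f g : A -> C) l : (forall x, In x l -> f x = g x) -> sumC f l = sumC g l.
Proof. induction l; simpl; intros; auto. rewrite H, IHl; auto. Qed.

Lemma sumC_app {A} (f : A -> C) l1 l2 : sumC f (l1 ++ l2) = Cadd (sumC f l1) (sumC f l2).
Proof. csum; rewrite sumR_app; auto. Qed.

Lemma sumC_add {A} (f g : A -> C) l : sumC (fun x => Cadd (f x) (g x)) l = Cadd (sumC f l) (sumC g l).
Proof. csum; rewrite <- sumR_plus; auto. Qed.

Lemma sumC_sub {A} (f g : A -> C) l : sumC (fun x => Csub (f x) (g x)) l = Csub (sumC f l) (sumC g l).
Proof.
  apply C_ext; unfold Csub, Cadd, Copp; simpl; rewrite ?sumC_fst, ?sumC_snd.
  - replace (sumR (fun x : A => fst (f x)) l + - sumR (fun x : A => fst (g x)) l) with (sumR (fun x : A => fst (f x)) l - sumR (fun x : A => fst (g x)) l) by ring.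
    rewrite <- sumR_minus; apply sumR_ext; intros; simpl; ring.
  - replace (sumR (fun x : A => snd (f x)) l + - sumR (fun x : A => snd (g x)) l) with (sumR (fun x : A => snd (f x)) l - sumR (fun x : A => snd (g x)) l) by ring.
    rewrite <- sumR_minus; apply sumR_ext; intros; simpl; ring.
Qed.

Lemma sumC_zero {A} (f : A -> C) l : (forall x, In x l -> f x = C0) -> sumC f l = C0.
Proof. induction l; simpl; intros; auto. rewrite H, IHl; auto. ceq. Qed.

Lemma sumC_perm {A} (f : A -> C) l l' : Permutation l l' -> sumC f l = sumC f l'.
Proof. intros. csum; apply sumR_perm; auto. Qed.

Lemma sumC_map {A B} (f : B -> C) (g : A -> B) l : sumC f (map g l) = sumC (fun x => f (g x)) l.
Proof. induction l; simpl; auto. rewrite IHl; auto. Qed.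

Lemma sumC_swap {A B} (F : A -> B -> C) l1 l2 :
  sumC (fun x => sumC (fun y => F x y) l2) l1 = sumC (fun y => sumC (fun x => F x y) l1) l2.
Proof.
  csum.
  - transitivity (sumR (fun x => sumR (fun y => fst (F x y)) l2) l1).
    apply sumR_ext; intros; rewrite sumC_fst; auto.
    rewrite sumR_swap. apply sumR_ext; intros; rewrite sumC_fst; auto.
  - transitivity (sumR (fun x => sumR (fun y => snd (F x y)) l2) l1).
    apply sumR_ext; intros; rewrite sumC_snd; auto.
    rewrite sumR_swap. apply sumR_ext; intros; rewrite sumC_snd; auto.
Qed.

Lemma sumC_single {A} (f : A -> C) l z : NoDup l -> In z l -> (forall x, In x l -> x <> z -> f x = C0) -> sumC f l = f z.
Proof.
  intros. csum; [apply (sumR_single (fun x => fst (f x)))|apply (sumR_single (fun x => snd (f x)))]; auto;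
  intros x Hx Hxz; rewrite H1; auto.
Qed.

Lemma sumC_single_out {A} (f : A -> C) l z : ~ In z l -> (forall x, In x l -> x <> z -> f x = C0) -> sumC f l = C0.
Proof. intros Hi H. apply sumC_zero. intros x Hx. apply H; auto. intros ->; contradiction. Qed.

Lemma Cnorm_sumC {A} (f : A -> C) l : Cnorm (sumC f l) <= sumR (fun x => Cnorm (f x)) l.
Proof. induction l; simpl. rewrite Cnorm_C0; lra. eapply Rle_trans. apply Cnorm_triangle. lra. Qed.

Lemma sumC_mul_l {A} (c : C) (f : A -> C) l : Cmul c (sumC f l) = sumC (fun x => Cmul c (f x)) l.
Proof. induction l; simpl. ceq. rewrite <- IHl. ceq. Qed.

Lemma sumC_mul_r {A} (c : C) (f : A -> C) l : Cmul (sumC f l) c = sumC (fun x => Cmul (f x) c) l.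
Proof. induction l; simpl. ceq. rewrite <- IHl. ceq. Qed.

Lemma NoDup_flat_map {A B} (g : A -> list B) l :
  NoDup l -> (forall x, In x l -> NoDup (g x)) ->
  (forall x y z, In x l -> In y l -> In z (g x) -> In z (g y) -> x = y) ->
  NoDup (flat_map g l).
Proof.
  induction l; simpl; intros Hn Hg Hd. constructor.
  inversion Hn; subst. apply NoDup_app.
  apply Hg; simpl; auto. apply IHl; auto. intros x y z Hx Hy; apply Hd; simpl; auto.
  intros z Hz Hz'. apply in_flat_map in Hz'. destruct Hz' as [y [Hy Hzy]].
  assert (a = y) by (apply (Hd a y z); simpl; auto). subst. contradiction.
Qed.

Lemma In_words n m a : In a (words n m) <-> valid n a /\ length a = m.
Proof.
  revert a; induction m; intros a; simpl.
  - split. intros [<-|[]]. split; [constructor|auto].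
    intros [_ H]. destruct a; simpl in H; [auto|lia].
  - rewrite in_flat_map. split.
    + intros [i [Hi Ha]]. apply in_map_iff in Ha. destruct Ha as [b [<- Hb]].
      apply IHm in Hb. destruct Hb. apply in_seq in Hi. split; [constructor; auto; lia|simpl; lia].
    + intros [Hv Hl]. destruct a as [|i b]; simpl in Hl; [lia|].
      inversion Hv; subst. exists i. split. apply in_seq; lia.
      apply in_map. apply IHm. split; auto.
Qed.

Lemma NoDup_words n m : NoDup (words n m).
Proof.
  induction m; simpl. repeat constructor; auto.
  apply NoDup_flat_map. apply seq_NoDup.
  intros i _. apply FinFun.Injective_map_NoDup; auto. intros x y H'; injection H'; auto.
  intros x y z _ _ H1 H2. apply in_map_iff in H1, H2.
  destruct H1 as [? [<- _]]. destruct H2 as [? [H _]]. injection H; auto.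
Qed.

Lemma words_valid n m a : In a (words n m) -> valid n a.
Proof. intros H; apply In_words in H; tauto. Qed.

Definition zl (N : nat) : list Z := map (fun i => (Z.of_nat i - Z.of_nat N)%Z) (seq 0 (S (2 * N))).

Lemma In_zl N k : In k (zl N) <-> (- Z.of_nat N <= k <= Z.of_nat N)%Z.
Proof.
  unfold zl. rewrite in_map_iff. split.
  - intros [i [<- Hi]]. apply in_seq in Hi. lia.
  - intros H. exists (Z.to_nat (k + Z.of_nat N)). split. lia. apply in_seq. lia.
Qed.

Lemma NoDup_zl N : NoDup (zl N).
Proof. apply FinFun.Injective_map_NoDup. intros x y H; lia. apply seq_NoDup. Qed.

Definition box (n N : nat) : list (Z * word) :=
  flat_map (fun k => flat_map (fun m => map (fun a => (k, a)) (words n m)) (seq 0 (S N))) (zl N).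

Lemma In_box n N k a : In (k, a) (box n N) <->
  ((- Z.of_nat N <= k <= Z.of_nat N)%Z /\ valid n a /\ (length a <= N)%nat).
Proof.
  unfold box. rewrite in_flat_map. split.
  - intros [k' [Hk H]]. apply in_flat_map in H. destruct H as [m [Hm H]].
    apply in_map_iff in H. destruct H as [b [Hb Hb']]. injection Hb; intros; subst.
    apply In_zl in Hk. apply In_words in Hb'. apply in_seq in Hm. intuition lia.
  - intros [Hk [Hv Hl]]. exists k. split. apply In_zl; auto.
    apply in_flat_map. exists (length a). split. apply in_seq; lia.
    apply in_map. apply In_words; auto.
Qed.

Lemma NoDup_box n N : NoDup (box n N).
Proof.
  unfold box. apply NoDup_flat_map. apply NoDup_zl.
  - intros k _. apply NoDup_flat_map. apply seq_NoDup.
    + intros m _. apply FinFun.Injective_map_NoDup. intros x y H; injection H; auto. apply NoDup_words.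
    + intros x y z _ _ H1 H2. apply in_map_iff in H1, H2.
      destruct H1 as [a [<- Ha]]. destruct H2 as [b [Hb Hb']]. injection Hb; intros; subst.
      apply In_words in Ha, Hb'. lia.
  - intros x y z _ _ H1 H2. apply in_flat_map in H1, H2.
    destruct H1 as [m [_ H1]]. destruct H2 as [m' [_ H2]].
    apply in_map_iff in H1, H2. destruct H1 as [a [<- _]]. destruct H2 as [b [Hb _]].
    injection Hb; auto.
Qed.

Lemma PS_box n w c N : PS n w c N = sumR (fun ka => Cnorm (c (fst ka) (snd ka)) * w (fst ka) (snd ka)) (box n N).
Proof.
  unfold PS, box. rewrite sumR_flat_map. fold (zl N). apply sumR_ext. intros k _.
  rewrite sumR_flat_map. apply sumR_ext. intros m _. rewrite sumR_map. simpl. auto.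
Qed.

Definition ZWdec : forall x y : Z * word, {x = y} + {x <> y}.
Proof. decide equality. apply list_eq_dec, Nat.eq_dec. apply Z.eq_dec. Defined.

Lemma sumR_ind_incl {A} (dec : forall x y : A, {x = y} + {x <> y}) (g : A -> R) l l' :
  NoDup l -> NoDup l' -> incl l l' ->
  sumR (fun x => if in_dec dec x l then g x else 0) l' = sumR g l.
Proof.
  intros Hn Hn' Hi.
  transitivity (sumR (fun x => sumR (fun z => if dec z x then g z else 0) l) l').
  - apply sumR_ext. intros x _. destruct in_dec.
    + symmetry. rewrite (sumR_single _ l x); auto. destruct dec; congruence.
      intros y _ Hy. destruct dec; congruence.
    + symmetry. apply (sumR_single_out _ l x); auto. intros y _ Hy. destruct dec; congruence.
  - rewrite sumR_swap. apply sumR_ext. intros z Hz.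
    rewrite (sumR_single _ l' z); auto. destruct dec; congruence.
    intros y _ Hy. destruct dec; congruence.
Qed.

Lemma sumR_incl {A} (g : A -> R) l l' :
  NoDup l -> NoDup l' -> incl l l' -> (forall x, In x l' -> 0 <= g x) -> sumR g l <= sumR g l'.
Proof.
  intros Hn Hn' Hi Hg.
  assert (dec : forall x y : A, {x = y} + {x <> y}).
  { intros x y. destruct (excluded_middle_informative (x = y)); auto. }
  rewrite <- (sumR_ind_incl dec g l l'); auto. apply sumR_le. intros x Hx.
  destruct in_dec; [lra|]. apply Hg; auto.
Qed.

Lemma box_incl n N N' : (N <= N')%nat -> incl (box n N) (box n N').
Proof. intros H [k a] Hx. apply In_box in Hx. apply In_box. intuition lia. Qed.

Definition Wpos (w : Z -> word -> R) := forall k a, 0 <= w k a.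

Lemma PS_nonneg n w c N : Wpos w -> 0 <= PS n w c N.
Proof.
  intros Hw. rewrite PS_box. apply sumR_nonneg. intros. apply Rmult_le_pos. apply Cnorm_nonneg. apply Hw.
Qed.

Lemma PS_mono n w c N N' : Wpos w -> (N <= N')%nat -> PS n w c N <= PS n w c N'.
Proof.
  intros Hw H. rewrite !PS_box. apply sumR_incl; auto using NoDup_box, box_incl.
  intros. apply Rmult_le_pos. apply Cnorm_nonneg. apply Hw.
Qed.

Lemma PS_term n w c N k a : Wpos w -> In (k, a) (box n N) -> Cnorm (c k a) * w k a <= PS n w c N.
Proof.
  intros Hw H. rewrite PS_box. apply (sumR_single_term (fun ka => Cnorm (c (fst ka) (snd ka)) * w (fst ka) (snd ka)) _ (k, a)); auto.
  intros. apply Rmult_le_pos. apply Cnorm_nonneg. apply Hw.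
Qed.

Lemma box_exists n k a : valid n a -> exists N, In (k, a) (box n N).
Proof.
  intros Hv. exists (Nat.max (Z.abs_nat k) (length a)). apply In_box. split; [|split]; auto; lia.
Qed.

Lemma PS_le n w w' c c' N :
  (forall k a, valid n a -> Cnorm (c k a) * w k a <= Cnorm (c' k a) * w' k a) -> PS n w c N <= PS n w' c' N.
Proof.
  intros H. rewrite !PS_box. apply sumR_le. intros [k a] Hx. apply In_box in Hx. apply H; tauto.
Qed.

Lemma PS_ext n w c c' N : (forall k a, c k a = c' k a) -> PS n w c N = PS n w c' N.
Proof. intros H. unfold PS. apply sumR_ext; intros; apply sumR_ext; intros; apply sumR_ext; intros. rewrite H; auto. Qed.

Lemma PS_add n w c c' N : Wpos w ->
  PS n w (fun k a => Cadd (c k a) (c' k a)) N <= PS n w c N + PS n w c' N.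
Proof.
  intros Hw. rewrite !PS_box. rewrite <- sumR_plus. apply sumR_le. intros [k a] _. simpl.
  pose proof (Cnorm_triangle (c k a) (c' k a)). pose proof (Hw k a). nra.
Qed.

Lemma PS_sub n w c c' N : Wpos w ->
  PS n w (fun k a => Csub (c k a) (c' k a)) N <= PS n w c N + PS n w c' N.
Proof.
  intros Hw. rewrite !PS_box. rewrite <- sumR_plus. apply sumR_le. intros [k a] _. simpl.
  pose proof (Cnorm_sub (c k a) (c' k a)). pose proof (Hw k a). nra.
Qed.

Definition cnt (h : nat) (t : word) : nat := length (filter (fun z => Nat.ltb h z) t).
Arguments cnt : simpl never.
Fixpoint asc (a : word) : nat := match a with nil => 0%nat | h :: t => (cnt h t + asc t)%nat end.
Fixpoint cross (A B : word) : nat := match A with nil => 0%nat | h :: t => (cnt h B + cross t B)%nat end.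
Definition cocc (a : word) (x : nat) : nat := count_occ Nat.eq_dec a x.
Arguments cocc : simpl never.

Lemma cnt_app h x y : cnt h (x ++ y) = (cnt h x + cnt h y)%nat.
Proof. unfold cnt. rewrite filter_app, length_app. auto. Qed.

Lemma cnt_cons h z t : cnt h (z :: t) = ((if Nat.ltb h z then 1 else 0) + cnt h t)%nat.
Proof. unfold cnt. simpl. destruct (Nat.ltb h z); simpl; auto. Qed.

Lemma asc_app x y : asc (x ++ y) = (asc x + asc y + cross x y)%nat.
Proof. induction x; simpl; [lia|]. rewrite cnt_app, IHx. lia. Qed.

Lemma cross_app_r A B D : cross A (B ++ D) = (cross A B + cross A D)%nat.
Proof. induction A; simpl; [lia|]. rewrite cnt_app, IHA. lia. Qed.

Lemma cnt_rep h y e : cnt h (repeat y e) = if Nat.ltb h y then e else 0%nat.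
Proof. induction e; simpl. destruct (Nat.ltb h y); auto. rewrite cnt_cons, IHe. destruct (Nat.ltb h y); lia. Qed.

Lemma asc_rep y b : asc (repeat y b) = 0%nat.
Proof. induction b; simpl; auto. rewrite cnt_rep, Nat.ltb_irrefl. lia. Qed.

Lemma cnt_le0 h X : (forall z, In z X -> (z <= h)%nat) -> cnt h X = 0%nat.
Proof. induction X; simpl; intros; auto. rewrite cnt_cons, IHX; auto. assert (a <= h)%nat by auto.
  destruct (Nat.ltb_spec h a); lia. Qed.

Lemma cross_rep_l y b X : (forall z, In z X -> (z <= y)%nat) -> cross (repeat y b) X = 0%nat.
Proof. intros H. induction b; simpl; auto. rewrite IHb, cnt_le0; auto. Qed.

Lemma cross_rep_r A y e : (forall h, In h A -> (h < y)%nat) -> cross A (repeat y e) = (length A * e)%nat.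
Proof. induction A; simpl; intros; auto. rewrite cnt_rep, IHA; auto.
  assert (a < y)%nat by auto. apply Nat.ltb_lt in H0. rewrite H0. lia. Qed.

Lemma asc_swap x c1 c2 y :
  (asc (x ++ c1 :: c2 :: y) + (if Nat.ltb c2 c1 then 1 else 0) =
   asc (x ++ c2 :: c1 :: y) + (if Nat.ltb c1 c2 then 1 else 0))%nat.
Proof.
  rewrite !asc_app. simpl. rewrite !cnt_cons.
  assert (cross x (c1 :: c2 :: y) = cross x (c2 :: c1 :: y)).
  { induction x; simpl; auto. rewrite IHx, !cnt_cons. lia. }
  rewrite H. lia.
Qed.

Lemma cnt0_iff h X : cnt h X = 0%nat <-> (forall z, In z X -> (z <= h)%nat).
Proof.
  split; [|apply cnt_le0]. induction X; simpl; intros H z Hz; [contradiction|].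
  rewrite cnt_cons in H. destruct Hz as [<-|Hz].
  - destruct (Nat.ltb_spec h a); lia.
  - apply IHX; auto. lia.
Qed.

Lemma ascent_exists a : (asc a > 0)%nat -> exists x i j y, a = x ++ i :: j :: y /\ (i < j)%nat.
Proof.
  induction a as [|h t IH]; simpl; intros H; [lia|].
  destruct (Nat.eq_dec (asc t) 0) as [E|E].
  - destruct t as [|h2 t2]. simpl in H. unfold cnt in H; simpl in H; lia.
    destruct (Nat.ltb_spec h h2).
    + exists nil, h, h2, t2. auto.
    + exfalso. simpl in E, H. assert (cnt h2 t2 = 0)%nat by lia.
      rewrite cnt0_iff in H1. assert (cnt h (h2 :: t2) = 0)%nat.
      { apply cnt0_iff. intros z [<-|Hz]; auto. specialize (H1 z Hz). lia. }
      lia.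
  - destruct IH as [x [i [j [y [-> Hij]]]]]. lia. exists (h :: x), i, j, y. auto.
Qed.

Lemma cocc_cons_eq t x : cocc (x :: t) x = S (cocc t x).
Proof. unfold cocc; simpl. destruct Nat.eq_dec; congruence. Qed.
Lemma cocc_cons_neq t h x : h <> x -> cocc (h :: t) x = cocc t x.
Proof. unfold cocc; simpl. destruct Nat.eq_dec; congruence. Qed.

Lemma cocc_In a x : (cocc a x > 0)%nat <-> In x a.
Proof. unfold cocc. rewrite (count_occ_In Nat.eq_dec). reflexivity. Qed.

Lemma uniq_asc0 a : forall b, (forall x, cocc a x = cocc b x) -> asc a = 0%nat -> asc b = 0%nat -> a = b.
Proof.
  induction a as [|h t IH]; intros b Hc Ha Hb.
  - destruct b as [|h' t']; auto. specialize (Hc h'). rewrite cocc_cons_eq in Hc. unfold cocc in Hc; simpl in Hc. lia.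
  - destruct b as [|h' t']. specialize (Hc h). rewrite cocc_cons_eq in Hc. unfold cocc in Hc; simpl in Hc. lia.
    simpl in Ha, Hb. assert (Ht : cnt h t = 0%nat) by lia. assert (Ht' : cnt h' t' = 0%nat) by lia.
    rewrite cnt0_iff in Ht, Ht'.
    assert (h = h').
    { assert (In h' (h :: t)). { apply cocc_In. rewrite Hc. rewrite cocc_cons_eq. lia. }
      assert (In h (h' :: t')). { apply cocc_In. rewrite <- Hc. rewrite cocc_cons_eq. lia. }
      destruct H as [->|H]; auto. destruct H0 as [->|H0]; auto.
      specialize (Ht _ H). specialize (Ht' _ H0). lia. }
    subst. f_equal. apply IH; try lia. intros x. specialize (Hc x).
    destruct (Nat.eq_dec h' x). subst. rewrite !cocc_cons_eq in Hc. lia.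
    rewrite !cocc_cons_neq in Hc; auto.
Qed.

Definition key (n : nat) (a : word) : list nat := map (cocc a) (seq 0 n).

Lemma valid_cocc n a x : valid n a -> (n <= x)%nat -> cocc a x = 0%nat.
Proof.
  intros Hv Hx. destruct (cocc a x) eqn:E; auto. assert (In x a) by (apply cocc_In; lia).
  unfold valid in Hv. rewrite Forall_forall in Hv. specialize (Hv x H). lia.
Qed.

Lemma key_cocc n a b : valid n a -> valid n b -> key n a = key n b -> forall x, cocc a x = cocc b x.
Proof.
  intros Ha Hb Hk x. destruct (Nat.lt_ge_cases x n).
  - unfold key in Hk. assert (nth x (map (cocc a) (seq 0 n)) 0%nat = nth x (map (cocc b) (seq 0 n)) 0%nat) by congruence.
    rewrite !(nth_indep _ 0%nat (cocc a 0)) in H0 by (rewrite length_map, length_seq; auto).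
    rewrite map_nth in H0. rewrite (nth_indep _ (cocc a 0) (cocc b 0)) in H0 by (rewrite length_map, length_seq; auto).
    rewrite map_nth in H0. rewrite seq_nth in H0 by auto. simpl in H0. auto.
  - rewrite !(valid_cocc n); auto.
Qed.

Lemma cocc_key n a b : (forall x, cocc a x = cocc b x) -> key n a = key n b.
Proof. intros H. unfold key. apply map_ext. auto. Qed.

Lemma valid_cocc_transfer n a b : valid n a -> (forall x, cocc a x = cocc b x) -> valid n b.
Proof.
  intros Ha H. unfold valid in *. rewrite Forall_forall in *. intros x Hx.
  apply Ha. apply cocc_In. rewrite H. apply cocc_In. auto.
Qed.

Lemma cocc_app a b x : cocc (a ++ b) x = (cocc a x + cocc b x)%nat.
Proof. unfold cocc. apply count_occ_app. Qed.

Lemma cocc_rep y e x : cocc (repeat y e) x = if Nat.eq_dec y x then e else 0%nat.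
Proof. induction e; simpl. destruct Nat.eq_dec; auto. unfold cocc in *; simpl. rewrite IHe. destruct Nat.eq_dec; auto. Qed.

Definition swap2 (p : nat) (a : word) : word :=
  firstn p a ++ match skipn p a with c1 :: c2 :: r => c2 :: c1 :: r | r => r end.

Lemma swap2_eq x c1 c2 y : swap2 (length x) (x ++ c1 :: c2 :: y) = x ++ c2 :: c1 :: y.
Proof.
  unfold swap2. rewrite firstn_app, skipn_app, Nat.sub_diag, firstn_all, skipn_all. simpl.
  rewrite app_nil_r. auto.
Qed.

Lemma swap2_short p a : (length a < p + 2)%nat -> swap2 p a = a.
Proof.
  intros H. unfold swap2. destruct (skipn p a) as [|c1 [|c2 r]] eqn:E.
  - rewrite app_nil_r. apply firstn_all2. destruct (Nat.le_gt_cases (length a) p); auto.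
    assert (length (skipn p a) = 0)%nat by (rewrite E; auto). rewrite length_skipn in H1. lia.
  - rewrite <- E. apply firstn_skipn.
  - assert (length (skipn p a) = 2 + length r)%nat by (rewrite E; auto). rewrite length_skipn in H0. lia.
Qed.

Lemma split_at p a : (p + 2 <= length a)%nat ->
  a = firstn p a ++ nth p a 0%nat :: nth (S p) a 0%nat :: skipn (S (S p)) a /\ length (firstn p a) = p.
Proof.
  intros H. split; [|rewrite length_firstn; lia].
  rewrite <- (firstn_skipn p a) at 1. f_equal.
  revert a H. induction p; intros a H.
  - destruct a as [|c1 [|c2 r]]; simpl in *; try lia. auto.
  - destruct a as [|c a]; simpl in *; [lia|]. apply IHp. lia.
Qed.

Ltac split_tac p a H :=
  let E := fresh "E" in let L := fresh "L" in
  destruct (split_at p a H) as [E L];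
  remember (firstn p a) as X; remember (skipn (S (S p)) a) as Y;
  remember (nth p a 0%nat) as c1; remember (nth (S p) a 0%nat) as c2;
  rewrite E; rewrite <- L.

Lemma swap2_invol p a : swap2 p (swap2 p a) = a.
Proof.
  destruct (Nat.lt_ge_cases (length a) (p + 2)).
  - rewrite (swap2_short p a H). apply swap2_short; auto.
  - split_tac p a H. rewrite !swap2_eq. auto.
Qed.

Lemma swap2_cocc p a x : cocc (swap2 p a) x = cocc a x.
Proof.
  destruct (Nat.lt_ge_cases (length a) (p + 2)).
  - rewrite swap2_short; auto.
  - split_tac p a H. rewrite swap2_eq.
    rewrite !cocc_app. unfold cocc; simpl. repeat destruct Nat.eq_dec; lia.
Qed.

Lemma swap2_length p a : length (swap2 p a) = length a.
Proof.
  destruct (Nat.lt_ge_cases (length a) (p + 2)).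
  - rewrite swap2_short; auto.
  - split_tac p a H. rewrite swap2_eq. rewrite !length_app. simpl. auto.
Qed.

Lemma sw_cons x t : switches (x :: t) = match t with nil => 0%nat | y :: _ => ((if Nat.eq_dec x y then 0 else 1) + switches t)%nat end.
Proof. destruct t; reflexivity. Qed.

Lemma sw_cons2 h h2 t : switches (h :: h2 :: t) = ((if Nat.eq_dec h h2 then 0 else 1) + switches (h2 :: t))%nat.
Proof. reflexivity. Qed.

Lemma sw_app x z : (switches (x ++ z) <= switches x + switches z + 1)%nat.
Proof.
  induction x as [|h x IH]. simpl; lia.
  destruct x as [|h2 x'].
  - destruct z as [|h2 z]; [simpl; lia|]. change ((h :: nil) ++ h2 :: z) with (h :: h2 :: z). rewrite sw_cons2. change (switches (h :: nil)) with 0%nat. destruct Nat.eq_dec; lia.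
  - change ((h :: h2 :: x') ++ z) with (h :: h2 :: (x' ++ z)).
    change ((h2 :: x') ++ z) with (h2 :: (x' ++ z)) in IH.
    rewrite !sw_cons2. destruct Nat.eq_dec; lia.
Qed.

Lemma sw_app_ge x z : (switches x + switches z <= switches (x ++ z))%nat.
Proof.
  induction x as [|h x IH]. simpl; lia.
  destruct x as [|h2 x'].
  - destruct z as [|h2 z]; [simpl; lia|]. change ((h :: nil) ++ h2 :: z) with (h :: h2 :: z). rewrite sw_cons2. change (switches (h :: nil)) with 0%nat. destruct Nat.eq_dec; lia.
  - change ((h :: h2 :: x') ++ z) with (h :: h2 :: (x' ++ z)).
    change ((h2 :: x') ++ z) with (h2 :: (x' ++ z)) in IH.
    rewrite !sw_cons2. destruct Nat.eq_dec; lia.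
Qed.

Lemma sw_rep y b : switches (repeat y b) = 0%nat.
Proof. induction b; auto. destruct b; auto. simpl repeat. rewrite sw_cons2. simpl repeat in IHb. rewrite IHb. destruct Nat.eq_dec; [lia|congruence]. Qed.

Lemma sw_firstn r u : (switches (firstn r u) <= switches u)%nat.
Proof. pose proof (sw_app_ge (firstn r u) (skipn r u)). rewrite firstn_skipn in H. lia. Qed.
Lemma sw_skipn r u : (switches (skipn r u) <= switches u)%nat.
Proof. pose proof (sw_app_ge (firstn r u) (skipn r u)). rewrite firstn_skipn in H. lia. Qed.

Lemma splus1_le a : (splus1 a <= switches a + 1)%nat.
Proof. destruct a; simpl; lia. Qed.

Definition fny (y : nat) (w : word) := filter (fun z => negb (Nat.eqb z y)) w.

Lemma fny_cocc_y y w : cocc (fny y w) y = 0%nat.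
Proof.
  destruct (cocc (fny y w) y) eqn:E; auto. assert (In y (fny y w)) by (apply cocc_In; lia).
  unfold fny in H. apply filter_In in H. destruct H. rewrite Nat.eqb_refl in H0. discriminate.
Qed.

Lemma fny_cocc_neq y w x : x <> y -> cocc (fny y w) x = cocc w x.
Proof.
  intros Hx. induction w as [|h t IH]; simpl. auto.
  destruct (Nat.eqb_spec h y); simpl.
  - subst. rewrite cocc_cons_neq; auto.
  - destruct (Nat.eq_dec h x). subst. rewrite !cocc_cons_eq. lia. rewrite !cocc_cons_neq; auto.
Qed.

Lemma fny_cocc y w x : cocc w x = (cocc (fny y w) x + if Nat.eq_dec y x then cocc w y else 0)%nat.
Proof.
  destruct (Nat.eq_dec y x). subst. rewrite fny_cocc_y. lia. rewrite fny_cocc_neq; auto. lia.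
Qed.

Lemma fny_length y w : length w = (length (fny y w) + cocc w y)%nat.
Proof.
  induction w as [|h t IH]; simpl. auto.
  destruct (Nat.eqb_spec h y).
  - subst. simpl. rewrite cocc_cons_eq. lia.
  - simpl. rewrite cocc_cons_neq; auto.
Qed.

Lemma cnt_fny h y t : (h < y)%nat -> (forall z, In z t -> (z <= y)%nat) -> cnt h t = (cnt h (fny y t) + cocc t y)%nat.
Proof.
  induction t as [|z t IH]; intros Hh Ht. unfold cnt, cocc; simpl; lia.
  rewrite cnt_cons. simpl. destruct (Nat.eqb_spec z y).
  - subst. simpl. rewrite cocc_cons_eq. rewrite IH; auto. 2: intros; apply Ht; simpl; auto.
    apply Nat.ltb_lt in Hh. rewrite Hh. lia.
  - simpl. rewrite cnt_cons. rewrite cocc_cons_neq; auto. rewrite IH; auto. lia. intros; apply Ht; simpl; auto.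
Qed.

Lemma asc_decomp y w : (forall z, In z w -> (z <= y)%nat) ->
  exists c, asc w = (asc (fny y w) + c)%nat /\ (c <= cocc w y * length (fny y w))%nat.
Proof.
  induction w as [|h t IH]; intros Hw. exists 0%nat. simpl. lia.
  destruct IH as [c [Hc1 Hc2]]. intros; apply Hw; simpl; auto.
  simpl. destruct (Nat.eqb_spec h y).
  - subst. simpl. exists c. rewrite cnt_le0. 2: intros; apply Hw; simpl; auto.
    rewrite cocc_cons_eq. nia.
  - simpl. assert (h < y)%nat by (assert (h <= y)%nat by (apply Hw; simpl; auto); lia).
    exists (cocc t y + c)%nat. rewrite cnt_fny with (y := y); auto. 2: intros; apply Hw; simpl; auto.
    rewrite cocc_cons_neq; auto. simpl. split. lia. nia.
Qed.

Lemma asc_build y b r e a u : (forall h, In h u -> (h < y)%nat) ->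
  asc (repeat y b ++ firstn r u ++ repeat y e ++ skipn r u ++ repeat y a) =
  (asc u + e * length (firstn r u) + a * length u)%nat.
Proof.
  intros Hu.
  set (A := firstn r u). set (B := skipn r u).
  assert (EU : u = A ++ B) by (symmetry; apply firstn_skipn).
  assert (HA : forall h, In h A -> (h < y)%nat) by (intros; apply Hu; rewrite EU; apply in_or_app; auto).
  assert (HB : forall h, In h B -> (h < y)%nat) by (intros; apply Hu; rewrite EU; apply in_or_app; auto).
  assert (le_all : forall X, (forall h, In h X -> (h < y)%nat) -> forall e', forall z, In z (X ++ repeat y e') -> (z <= y)%nat).
  { intros X HX e' z Hz. apply in_app_or in Hz. destruct Hz. specialize (HX z H). lia. apply repeat_spec in H. lia. }
  rewrite asc_app, asc_rep, cross_rep_l.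
  2:{ intros z Hz. apply in_app_or in Hz. destruct Hz as [Hz|Hz]. specialize (HA z Hz); lia.
      apply in_app_or in Hz. destruct Hz as [Hz|Hz]. apply repeat_spec in Hz; lia.
      apply (le_all B HB a z Hz). }
  rewrite asc_app, asc_app, asc_rep, cross_rep_l by (apply le_all; auto).
  rewrite asc_app, asc_rep, cross_rep_r by auto.
  rewrite cross_app_r, cross_app_r, !cross_rep_r by auto.
  rewrite EU, asc_app, length_app. fold A. nia.
Qed.

Fixpoint Kb (n : nat) : nat := match n with O => O | S n' => (2 * Kb n' + 4)%nat end.

Lemma lowsw n : forall w, valid n w -> exists w', (forall x, cocc w' x = cocc w x) /\ asc w' = asc w /\
  (switches w' <= Kb n)%nat /\ length w' = length w.
Proof.
  induction n as [|n IH]; intros w Hw.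
  - destruct w as [|h t]. exists nil. repeat split; auto.
    inversion Hw. lia.
  - set (y := n). set (u := fny y w).
    assert (Hu : valid n u).
    { unfold valid in *. rewrite Forall_forall in *. intros z Hz. unfold u, fny in Hz. apply filter_In in Hz.
      destruct Hz as [Hz1 Hz2]. specialize (Hw z Hz1). destruct (Nat.eqb_spec z y); simpl in Hz2; [discriminate|]. unfold y in *; lia. }
    destruct (IH u Hu) as [u' [Hc [Ha [Hs Hl]]]].
    assert (Hu' : forall h, In h u' -> (h < y)%nat).
    { intros h Hh. assert (In h u). { apply cocc_In. rewrite <- Hc. apply cocc_In; auto. }
      unfold valid in Hu. rewrite Forall_forall in Hu. specialize (Hu h H). unfold y; lia. }
    destruct (asc_decomp y w) as [c [Hc1 Hc2]].
    { intros z Hz. unfold valid in Hw. rewrite Forall_forall in Hw. specialize (Hw z Hz). unfold y; lia. }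
    fold u in Hc1, Hc2. set (p := cocc w y) in *. set (L := length u) in *.
    assert (build : forall b r e a, (b + e + a = p)%nat -> (e * length (firstn r u') + a * L = c)%nat ->
      exists w', (forall x, cocc w' x = cocc w x) /\ asc w' = asc w /\ (switches w' <= Kb (S n))%nat /\ length w' = length w).
    { intros b r e a H1 H2. exists (repeat y b ++ firstn r u' ++ repeat y e ++ skipn r u' ++ repeat y a).
      split; [|split; [|split]].
      - intros x. rewrite (fny_cocc y w x). fold u. rewrite <- Hc. fold p.
        rewrite <- (firstn_skipn r u') at 3. rewrite !cocc_app, !cocc_rep.
        destruct Nat.eq_dec; lia.
      - rewrite asc_build by auto. rewrite Hc1, <- Ha, Hl. lia.
      - simpl Kb. pose proof (sw_firstn r u'). pose proof (sw_skipn r u').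
        pose proof (sw_app (repeat y b) (firstn r u' ++ repeat y e ++ skipn r u' ++ repeat y a)).
        pose proof (sw_app (firstn r u') (repeat y e ++ skipn r u' ++ repeat y a)).
        pose proof (sw_app (repeat y e) (skipn r u' ++ repeat y a)).
        pose proof (sw_app (skipn r u') (repeat y a)).
        rewrite !sw_rep in *. lia.
      - rewrite (fny_length y w). fold u p. rewrite !length_app, !repeat_length.
        rewrite <- (firstn_skipn r u') in Hl. rewrite length_app in Hl. lia. }
    destruct (Nat.eq_dec c (p * L)) as [E|E].
    + apply (build 0 0 0 p)%nat; lia.
    + assert (HL : (L > 0)%nat) by (destruct L; lia).
      assert (Hq : (c / L < p)%nat). { apply Nat.div_lt_upper_bound; lia. }
      apply (build (p - 1 - c / L) (c mod L) 1 (c / L))%nat. lia.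
      rewrite length_firstn. rewrite Hl. fold L. pose proof (Nat.mod_upper_bound c L).
      rewrite Nat.min_l by lia. pose proof (Nat.div_mod_eq c L). lia.
Qed.

Lemma Rw_ex n w : exists w', valid n w -> (forall x, cocc w' x = cocc w x) /\ asc w' = asc w /\
  (switches w' <= Kb n)%nat /\ length w' = length w.
Proof.
  destruct (classic (valid n w)) as [H|H].
  - destruct (lowsw n w H) as [w' Hw']. exists w'. auto.
  - exists w. intros; contradiction.
Qed.

Definition Rw n (w : word) : word := proj1_sig (constructive_indefinite_description _ (Rw_ex n w)).

Lemma Rw_spec n w : valid n w -> (forall x, cocc (Rw n w) x = cocc w x) /\ asc (Rw n w) = asc w /\
  (switches (Rw n w) <= Kb n)%nat /\ length (Rw n w) = length w.
Proof. unfold Rw. destruct constructive_indefinite_description; simpl; auto. Qed.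

Lemma Rw_valid n w : valid n w -> valid n (Rw n w).
Proof. intros H. apply valid_cocc_transfer with w; auto. intros; symmetry; apply Rw_spec; auto. Qed.

Lemma Rw_words n m w : In w (words n m) -> In (Rw n w) (words n m).
Proof. intros H. apply In_words in H. destruct H. apply In_words. split. apply Rw_valid; auto.
  rewrite (proj2 (proj2 (proj2 (Rw_spec n w H)))). auto. Qed.

Lemma Rw_key n w : valid n w -> key n (Rw n w) = key n w.
Proof. intros H. apply cocc_key. apply Rw_spec; auto. Qed.

Definition keq (a b : list nat) : bool := if list_eq_dec Nat.eq_dec a b then true else false.

Definition phi n (c : Coef) (M : Z) (kap : list nat) (L : nat) : C :=
  sumC (fun a => if list_eq_dec Nat.eq_dec (key n a) kap then c (M - Z.of_nat (asc a))%Z a else C0) (words n L).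

Definition Rmap n (d : Coef) : Coef := fun k w' =>
  sumC (fun w => if list_eq_dec Nat.eq_dec (Rw n w) w' then d k w else C0) (words n (length w')).

Lemma Rmap_phi n d M kap L : phi n (Rmap n d) M kap L = phi n d M kap L.
Proof.
  unfold phi, Rmap.
  transitivity (sumC (fun a => sumC (fun w => if list_eq_dec Nat.eq_dec (Rw n w) a then
        (if list_eq_dec Nat.eq_dec (key n w) kap then d (M - Z.of_nat (asc w))%Z w else C0) else C0) (words n L)) (words n L)).
  - apply sumC_ext. intros a Ha. assert (Hl : length a = L) by (apply In_words in Ha; tauto). rewrite Hl.
    destruct list_eq_dec as [Hk|Hk].
    + apply sumC_ext. intros w Hw. destruct list_eq_dec as [E|E]; auto.
      subst a. assert (valid n w) by (eapply words_valid; eauto).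
      rewrite Rw_key in Hk by auto. destruct list_eq_dec; [|congruence].
      rewrite (proj1 (proj2 (Rw_spec n w H))). auto.
    + symmetry. apply sumC_zero. intros w Hw. destruct list_eq_dec as [E|E]; auto.
      subst a. assert (valid n w) by (eapply words_valid; eauto).
      rewrite Rw_key in Hk by auto. destruct list_eq_dec; congruence.
  - rewrite sumC_swap. apply sumC_ext. intros w Hw.
    rewrite (sumC_single _ _ (Rw n w)). destruct list_eq_dec; congruence.
    apply NoDup_words. apply Rw_words; auto.
    intros a _ Ha. destruct list_eq_dec; congruence.
Qed.

Lemma pow_le_mono (t : R) (a b : nat) : 1 <= t -> (a <= b)%nat -> t ^ a <= t ^ b.
Proof. intros. apply Rle_pow; auto. Qed.

Lemma Rmap_PS n rho sg tau d N : 1 <= rho -> 0 < sg -> 1 <= tau ->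
  PS n (wF (rho, sg, tau)) (Rmap n d) N <= tau ^ (Kb n + 1) * PS n (wFT (rho, sg, tau)) d N.
Proof.
  intros Hr Hs Ht. unfold PS. rewrite <- sumR_scal. apply sumR_le. intros k _.
  rewrite <- sumR_scal. apply sumR_le. intros m _. rewrite <- sumR_scal.
  set (K := tau ^ (Kb n + 1)). set (cst := rho ^ Z.abs_nat k * sg ^ m).
  assert (Hc : 0 <= cst) by (unfold cst; apply Rmult_le_pos; apply pow_le; lra).
  assert (HK : 1 <= K) by (unfold K; apply pow_R1_Rle; auto).
  transitivity (sumR (fun w' => sumR (fun w => if list_eq_dec Nat.eq_dec (Rw n w) w' then Cnorm (d k w) * (cst * K) else 0) (words n m)) (words n m)).
  - apply sumR_le. intros w' Hw'. apply In_words in Hw'. destruct Hw' as [Hv Hl].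
    unfold Rmap. rewrite Hl. simpl wF. unfold cst. rewrite Hl.
    eapply Rle_trans. apply Rmult_le_compat_r. apply Rmult_le_pos. apply Rmult_le_pos; apply pow_le; lra. apply pow_le; lra.
    apply Cnorm_sumC. rewrite Rmult_comm, <- sumR_scal. apply sumR_le. intros w Hw.
    destruct list_eq_dec as [E|E]; [|rewrite Cnorm_C0; lra].
    subst w'. assert (valid n w) by (eapply words_valid; eauto).
    destruct (Rw_spec n w H) as [_ [_ [Hsw _]]].
    assert (tau ^ splus1 (Rw n w) <= K). { unfold K. apply pow_le_mono; auto. pose proof (splus1_le (Rw n w)). lia. }
    assert (0 <= rho ^ Z.abs_nat k * sg ^ m) by (apply Rmult_le_pos; apply pow_le; lra).
    pose proof (Cnorm_nonneg (d k w)).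
    assert (0 <= rho ^ Z.abs_nat k * sg ^ m * Cnorm (d k w)) by (apply Rmult_le_pos; auto).
    nra.
  - rewrite sumR_swap. apply sumR_le. intros w Hw.
    rewrite (sumR_single _ _ (Rw n w)). destruct list_eq_dec; [|congruence].
    apply In_words in Hw. destruct Hw as [_ Hl]. simpl wFT. rewrite Hl. unfold cst. lra.
    apply NoDup_words. apply Rw_words; auto.
    intros a _ Ha. destruct list_eq_dec; congruence.
Qed.

Lemma inf_sum_ext f g l : (forall k, f k = g k) -> infinite_sum f l -> infinite_sum g l.
Proof.
  intros H Hf eps He. destruct (Hf eps He) as [N HN]. exists N. intros m Hm.
  rewrite <- (sum_eq f g m) by auto. apply HN; auto.
Qed.

Lemma inf_sum_plus f g l1 l2 : infinite_sum f l1 -> infinite_sum g l2 -> infinite_sum (fun k => f k + g k) (l1 + l2).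
Proof.
  intros H1 H2. pose proof (CV_plus _ _ _ _ H1 H2). intros eps He. destruct (H eps He) as [N HN].
  exists N. intros m Hm. rewrite plus_sum. apply HN; auto.
Qed.

Lemma inf_sum_opp f l : infinite_sum f l -> infinite_sum (fun k => - f k) (- l).
Proof.
  intros H eps He. destruct (H eps He) as [N HN]. exists N. intros m Hm.
  assert (E : forall m, sum_f_R0 (fun k => - f k) m = - sum_f_R0 f m).
  { induction m0; simpl; auto. rewrite IHm0. ring. }
  rewrite E. unfold R_dist in *. replace (- sum_f_R0 f m - - l) with (- (sum_f_R0 f m - l)) by ring.
  rewrite Rabs_Ropp. apply HN; auto.
Qed.

Lemma inf_sum_uniq f l1 l2 : infinite_sum f l1 -> infinite_sum f l2 -> l1 = l2.
Proof. apply uniqueness_sum. Qed.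

Lemma sum_single f (k0 m : nat) : (forall k, k <> k0 -> f k = 0) -> sum_f_R0 f m = if Nat.ltb m k0 then 0 else f k0.
Proof.
  intros H. induction m; simpl.
  - destruct (Nat.ltb_spec 0 k0). apply H; lia. assert (k0 = 0)%nat by lia. subst; auto.
  - rewrite IHm. destruct (Nat.ltb_spec m k0), (Nat.ltb_spec (S m) k0);
    first [lia | rewrite (H (S m)) by lia; ring | (assert (k0 = S m) by lia; subst; ring)].
Qed.

Lemma inf_sum_single f (k0 : nat) : (forall k, k <> k0 -> f k = 0) -> infinite_sum f (f k0).
Proof.
  intros H eps He. exists k0. intros m Hm. rewrite (sum_single f k0 m H).
  destruct (Nat.ltb_spec m k0); [lia|]. unfold R_dist. rewrite Rminus_diag, Rabs_R0. auto.
Qed.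

Lemma inf_sum_zero f : (forall k, f k = 0) -> infinite_sum f 0.
Proof. intros H. replace 0 with (f 0%nat) by auto. apply inf_sum_single. auto. Qed.

Lemma CSeries_ext u v L : (forall k, u k = v k) -> CSeries u L -> CSeries v L.
Proof. intros H [H1 H2]. split; eapply inf_sum_ext; eauto; intros; simpl; rewrite H; auto. Qed.

Lemma ZHasSum_ext f g L : (forall k, f k = g k) -> ZHasSum f L -> ZHasSum g L.
Proof.
  intros H [L1 [L2 [H1 [H2 E]]]]. exists L1, L2. split; [|split]; auto; eapply CSeries_ext; eauto; intros; simpl; auto.
Qed.

Lemma ZHasSum_uniq f L L' : ZHasSum f L -> ZHasSum f L' -> L = L'.
Proof.
  intros [L1 [L2 [[A1 A2] [[B1 B2] E]]]] [L1' [L2' [[A1' A2'] [[B1' B2'] E']]]].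
  subst. f_equal; apply C_ext; eapply inf_sum_uniq; eauto.
Qed.

Lemma CSeries_plus u v L L' : CSeries u L -> CSeries v L' -> CSeries (fun k => Cadd (u k) (v k)) (Cadd L L').
Proof. intros [A1 A2] [B1 B2]. split; simpl; apply inf_sum_plus; auto. Qed.

Lemma ZHasSum_add f g L L' : ZHasSum f L -> ZHasSum g L' -> ZHasSum (fun k => Cadd (f k) (g k)) (Cadd L L').
Proof.
  intros [L1 [L2 [A1 [A2 E]]]] [L1' [L2' [B1 [B2 E']]]]. subst.
  exists (Cadd L1 L1'), (Cadd L2 L2'). split; [|split].
  apply (CSeries_plus (fun k => f (Z.of_nat k)) (fun k => g (Z.of_nat k))); auto.
  apply (CSeries_plus (fun k => f (- Z.of_nat (S k))%Z) (fun k => g (- Z.of_nat (S k))%Z)); auto.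
  ceq.
Qed.

Lemma ZHasSum_opp f L : ZHasSum f L -> ZHasSum (fun k => Copp (f k)) (Copp L).
Proof.
  intros [L1 [L2 [[A1 A2] [[B1 B2] E]]]]. subst. exists (Copp L1), (Copp L2).
  split; [|split]; [split|split|]; simpl; try apply inf_sum_opp; auto. ceq.
Qed.

Lemma CSeries_zero u : (forall k, u k = C0) -> CSeries u C0.
Proof. intros H. unfold CSeries. split; simpl; [apply (inf_sum_zero (fun k => fst (u k)))|apply (inf_sum_zero (fun k => snd (u k)))]; intros; rewrite H; auto. Qed.

Lemma CSeries_single u k0 : (forall k, k <> k0 -> u k = C0) -> CSeries u (u k0).
Proof. intros H. unfold CSeries. split; [apply (inf_sum_single (fun k => fst (u k)))|apply (inf_sum_single (fun k => snd (u k)))]; intros k Hk; rewrite H; auto. Qed.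

Lemma ZHasSum_single f k0 : (forall k, k <> k0 -> f k = C0) -> ZHasSum f (f k0).
Proof.
  intros H. destruct (Z_le_gt_dec 0 k0).
  - exists (f k0), C0. split; [|split].
    + assert (E : f k0 = f (Z.of_nat (Z.to_nat k0))) by (f_equal; lia). rewrite E.
      apply (CSeries_single (fun k => f (Z.of_nat k))). intros k Hk. apply H. lia.
    + apply CSeries_zero. intros. apply H. lia.
    + ceq.
  - exists C0, (f k0). split; [|split].
    + apply CSeries_zero. intros. apply H. lia.
    + assert (E : f k0 = f (- Z.of_nat (S (Z.to_nat (- k0 - 1))))%Z) by (f_equal; lia). rewrite E.
      apply (CSeries_single (fun k => f (- Z.of_nat (S k))%Z)). intros k Hk. apply H. lia.
    + ceq.
Qed.

Lemma ZHasSum_zero f : (forall k, f k = C0) -> ZHasSum f C0.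
Proof. intros H. replace C0 with (f 0%Z) by auto. apply ZHasSum_single. auto. Qed.

Lemma ZHasSum_sumC {A} (F : A -> Z -> C) (L : A -> C) l :
  (forall x, In x l -> ZHasSum (F x) (L x)) -> ZHasSum (fun k => sumC (fun x => F x k) l) (sumC L l).
Proof.
  induction l; simpl; intros H. apply ZHasSum_zero; auto.
  apply ZHasSum_add; auto.
Qed.

Lemma Coef_ext (f g : Coef) : (forall k a, f k a = g k a) -> f = g.
Proof. intros H. apply functional_extensionality; intros k. apply functional_extensionality; intros a. auto. Qed.

Definition mono (k0 : Z) (a0 : word) (al : C) : Coef := fun k a =>
  if Z.eq_dec k k0 then if list_eq_dec Nat.eq_dec a a0 then al else C0 else C0.

Definition prefixb (x g : word) : bool := if list_eq_dec Nat.eq_dec (firstn (length x) g) x then true else false.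
Definition suffixb (y g : word) : bool :=
  andb (Nat.leb (length y) (length g)) (if list_eq_dec Nat.eq_dec (skipn (length g - length y) g) y then true else false).

Lemma prefixb_true x g : prefixb x g = true -> g = x ++ skipn (length x) g.
Proof. unfold prefixb. destruct list_eq_dec as [e|e]; try discriminate. intros _. rewrite <- (firstn_skipn (length x) g) at 1. rewrite e. reflexivity. Qed.

Lemma prefixb_app x r : prefixb x (x ++ r) = true.
Proof. unfold prefixb. rewrite firstn_app, firstn_all, Nat.sub_diag, firstn_O, app_nil_r. destruct list_eq_dec; congruence. Qed.

Lemma suffixb_true y g : suffixb y g = true -> g = firstn (length g - length y) g ++ y.
Proof. unfold suffixb. destruct list_eq_dec as [e|e]; [|rewrite andb_false_r; discriminate]. intros _. rewrite <- (firstn_skipn (length g - length y) g) at 1. rewrite e. reflexivity. Qed.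

Lemma suffixb_app r y : suffixb y (r ++ y) = true.
Proof.
  unfold suffixb. rewrite length_app. replace (length r + length y - length y)%nat with (length r) by lia.
  rewrite skipn_app, skipn_all, Nat.sub_diag, skipn_O. simpl. destruct list_eq_dec; [|congruence].
  apply andb_true_intro; split; auto. apply Nat.leb_le; lia.
Qed.

Lemma firstn_eq_len (x g : word) jj : (jj <= length g)%nat -> firstn jj g = x -> jj = length x.
Proof. intros H E. subst. rewrite length_firstn. lia. Qed.

Lemma IsProd_mono_l k0 x al b :
  IsProd (mono k0 x al) b (fun m g => if prefixb x g then Cmul al (b (m - k0)%Z (skipn (length x) g)) else C0).
Proof.
  intros m g.
  set (F := fun k => sumC (fun j => Cmul (mono k0 x al k (firstn j g)) (b (m - k)%Z (skipn j g))) (seq 0 (S (length g)))).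
  assert (HF : ZHasSum F (F k0)).
  { apply ZHasSum_single. intros k Hk. apply sumC_zero. intros jj _. unfold mono. destruct Z.eq_dec; [congruence|]. ceq. }
  replace (if prefixb x g then Cmul al (b (m - k0)%Z (skipn (length x) g)) else C0) with (F k0); auto.
  unfold F, mono. destruct (prefixb x g) eqn:E.
  - assert (Hg := prefixb_true _ _ E).
    assert (Hl : (length x <= length g)%nat) by (rewrite Hg, length_app; lia).
    rewrite (sumC_single _ _ (length x)). destruct Z.eq_dec; [|congruence].
    destruct list_eq_dec; auto. exfalso. apply n. rewrite Hg. rewrite firstn_app, firstn_all, Nat.sub_diag, firstn_O, app_nil_r. auto.
    apply seq_NoDup. apply in_seq; lia.
    intros jj Hjj Hne. destruct Z.eq_dec; [|congruence]. destruct list_eq_dec; [|ceq].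
    apply in_seq in Hjj. exfalso. apply Hne. apply firstn_eq_len with g; auto; lia.
  - apply sumC_zero. intros jj Hjj. destruct Z.eq_dec; [|ceq]. destruct list_eq_dec; [|ceq].
    exfalso. apply in_seq in Hjj. assert (jj = length x) by (apply firstn_eq_len with g; auto; lia). subst.
    unfold prefixb in E. destruct list_eq_dec; congruence.
Qed.

Lemma IsProd_mono_r a k0 y be :
  IsProd a (mono k0 y be) (fun m g => if suffixb y g then Cmul (a (m - k0)%Z (firstn (length g - length y) g)) be else C0).
Proof.
  intros m g.
  set (F := fun k => sumC (fun j => Cmul (a k (firstn j g)) (mono k0 y be (m - k)%Z (skipn j g))) (seq 0 (S (length g)))).
  assert (HF : ZHasSum F (F (m - k0)%Z)).
  { apply ZHasSum_single. intros k Hk. apply sumC_zero. intros jj _. unfold mono. destruct Z.eq_dec; [lia|]. ceq. }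
  replace (if suffixb y g then Cmul (a (m - k0)%Z (firstn (length g - length y) g)) be else C0) with (F (m - k0)%Z); auto.
  unfold F, mono. replace (m - (m - k0))%Z with k0 by lia.
  destruct (suffixb y g) eqn:E.
  - assert (Hg := suffixb_true _ _ E).
    assert (Hl : (length y <= length g)%nat) by (rewrite Hg, length_app; lia).
    rewrite (sumC_single _ _ (length g - length y)%nat). destruct Z.eq_dec; [|congruence].
    destruct list_eq_dec; auto. exfalso. apply n. unfold suffixb in E. destruct list_eq_dec; auto. rewrite andb_false_r in E; discriminate.
    apply seq_NoDup. apply in_seq; lia.
    intros jj Hjj Hne. destruct Z.eq_dec; [|congruence]. destruct list_eq_dec; [|ceq].
    apply in_seq in Hjj. exfalso. apply Hne. rewrite <- e0. rewrite length_skipn. lia.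
  - apply sumC_zero. intros jj Hjj. destruct Z.eq_dec; [|ceq]. destruct list_eq_dec; [|ceq].
    exfalso. apply in_seq in Hjj. assert (jj = length g - length y)%nat by (rewrite <- e0, length_skipn; lia). subst jj.
    rewrite <- (firstn_skipn (length g - length y) g) in E. rewrite e0 in E. rewrite suffixb_app in E. discriminate.
Qed.

Section Ideal.
Variables (n : nat) (r : option R) (W : param -> Z -> word -> R).
Hypothesis HW : forall p, adm r p -> Wpos (W p).

Lemma InJ_ext y y' : InJ n r W y -> (forall k a, y k a = y' k a) -> InJ n r W y'.
Proof. intros H E. rewrite <- (Coef_ext _ _ E). auto. Qed.

Lemma InJ_zero y : (forall k a, y k a = C0) -> InJ n r W y.
Proof. intros H. apply InJ_ext with czero. constructor. intros; rewrite H; auto. Qed.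

Lemma InJ_add y1 y2 : InJ n r W y1 -> InJ n r W y2 -> InJ n r W (cadd y1 y2).
Proof.
  intros H1 H2. induction H2 as [|x u v t w i j y Hx IH Hu Hv Hij Hjn Ht Hw Hy].
  - apply InJ_ext with y1; auto. intros; unfold cadd, czero; ceq.
  - apply (JS n r W (cadd y1 x) u v t w i j); auto.
    intros k a. unfold cadd. rewrite Hy. ceq.
Qed.

Lemma InJ_sum {A} (F : A -> Coef) l : (forall z, In z l -> InJ n r W (F z)) ->
  InJ n r W (fun k a => sumC (fun z => F z k a) l).
Proof.
  induction l; simpl; intros H. apply InJ_zero; auto.
  apply InJ_ext with (cadd (F a) (fun k a0 => sumC (fun z => F z k a0) l)).
  apply InJ_add; auto. intros; unfold cadd; auto.
Qed.

Lemma mono_InSp k0 a0 al : valid n a0 -> InSp n r W (mono k0 a0 al).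
Proof.
  intros Hv. split.
  - intros k a Ha. unfold mono. destruct Z.eq_dec; auto. destruct list_eq_dec; auto. subst; contradiction.
  - intros p Hp. exists (Cnorm al * W p k0 a0). intros N. rewrite PS_box.
    assert (Hz : forall x, In x (box n N) -> x <> (k0, a0) ->
       Cnorm (mono k0 a0 al (fst x) (snd x)) * W p (fst x) (snd x) = 0).
    { intros [k a] _ Hx. unfold mono; simpl. destruct Z.eq_dec; [destruct list_eq_dec|].
      subst; congruence. all: rewrite Cnorm_C0; ring. }
    pose proof (HW p Hp k0 a0). pose proof (Cnorm_nonneg al).
    destruct (in_dec ZWdec (k0, a0) (box n N)).
    + rewrite (sumR_single _ _ (k0, a0)); auto. simpl. unfold mono.
      destruct Z.eq_dec; [|congruence]. destruct list_eq_dec; [|congruence]. lra.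
      apply NoDup_box.
    + rewrite (sumR_single_out _ _ (k0, a0)); auto. nra.
Qed.

Lemma gen_val i j d s : i <> j -> gen i j d s =
  if list_eq_dec Nat.eq_dec s (i :: j :: nil) then (if Z.eq_dec d 0 then C1 else C0)
  else if list_eq_dec Nat.eq_dec s (j :: i :: nil) then (if Z.eq_dec d 1 then Copp C1 else C0) else C0.
Proof.
  intros Hij. unfold gen.
  destruct (list_eq_dec Nat.eq_dec s (i :: j :: nil)) as [E|E];
  destruct (list_eq_dec Nat.eq_dec s (j :: i :: nil)) as [F|F];
  [subst; injection F; intros; congruence| | |];
  destruct (Z.eqb_spec d 0); destruct (Z.eqb_spec d 1); simpl;
  repeat destruct Z.eq_dec; try lia; auto.
Qed.

Lemma valid_app x y : valid n (x ++ y) <-> valid n x /\ valid n y.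
Proof. unfold valid. apply Forall_app. Qed.

Lemma gen_step x y i j k al : valid n x -> valid n y -> (i < j)%nat -> (j < n)%nat ->
  InJ n r W (fun m g => Csub (mono k (x ++ i :: j :: y) al m g) (mono (k + 1) (x ++ j :: i :: y) al m g)).
Proof.
  intros Hx Hy Hij Hjn.
  set (t := fun m g => if prefixb x g then Cmul al (gen i j (m - k)%Z (skipn (length x) g)) else C0).
  set (w := fun m g => if suffixb y g then Cmul (t (m - 0)%Z (firstn (length g - length y) g)) C1 else C0).
  apply (JS n r W czero (mono k x al) (mono 0 y C1) t w i j). constructor.
  apply mono_InSp; auto. apply mono_InSp; auto. auto. auto.
  apply IsProd_mono_l. apply IsProd_mono_r.
  intros m g. unfold czero.
  assert (Hne : i <> j) by lia.
  assert (Hw : w m g = if suffixb y g then if prefixb x (firstn (length g - length y) g) then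
     Cmul al (gen i j (m - k)%Z (skipn (length x) (firstn (length g - length y) g))) else C0 else C0).
  { unfold w, t. replace (m - 0)%Z with m by lia. destruct suffixb; auto. destruct prefixb; ceq. }
  rewrite Hw. clear Hw.
  set (A := x ++ i :: j :: y). set (B := x ++ j :: i :: y).
  assert (HAB : A <> B). { unfold A, B. intros E. apply app_inv_head in E. injection E; intros; lia. }
  destruct (suffixb y g) eqn:Es.
  2:{ assert (g <> A). { intros ->. unfold A in Es. replace (x ++ i :: j :: y) with ((x ++ i :: j :: nil) ++ y) in Es by (rewrite <- app_assoc; auto). rewrite suffixb_app in Es. discriminate. }
      assert (g <> B). { intros ->. unfold B in Es. replace (x ++ j :: i :: y) with ((x ++ j :: i :: nil) ++ y) in Es by (rewrite <- app_assoc; auto). rewrite suffixb_app in Es. discriminate. }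
      unfold mono. destruct Z.eq_dec; destruct Z.eq_dec; repeat destruct list_eq_dec; try congruence; ceq. }
  pose proof (suffixb_true _ _ Es) as Eg. set (g0 := firstn (length g - length y) g) in *.
  destruct (prefixb x g0) eqn:Ep.
  2:{ assert (g <> A). { intros E. unfold A in E. rewrite E in Eg. replace (x ++ i :: j :: y) with ((x ++ i :: j :: nil) ++ y) in Eg by (rewrite <- app_assoc; auto).
        apply app_inv_tail in Eg. rewrite <- Eg in Ep. rewrite prefixb_app in Ep. discriminate. }
      assert (g <> B). { intros E. unfold B in E. rewrite E in Eg. replace (x ++ j :: i :: y) with ((x ++ j :: i :: nil) ++ y) in Eg by (rewrite <- app_assoc; auto).
        apply app_inv_tail in Eg. rewrite <- Eg in Ep. rewrite prefixb_app in Ep. discriminate. }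
      unfold mono. destruct Z.eq_dec; destruct Z.eq_dec; repeat destruct list_eq_dec; try congruence; ceq. }
  pose proof (prefixb_true _ _ Ep) as Eg0. set (mid := skipn (length x) g0) in *.
  assert (Gd : g = x ++ mid ++ y) by (rewrite Eg, Eg0 at 1; rewrite <- app_assoc; auto).
  rewrite gen_val by auto.
  assert (EA : g = A <-> mid = i :: j :: nil).
  { unfold A. rewrite Gd. split; intros E. apply app_inv_head in E. replace (i :: j :: y) with ((i :: j :: nil) ++ y) in E by auto. apply app_inv_tail in E. auto. rewrite E. auto. }
  assert (EB : g = B <-> mid = j :: i :: nil).
  { unfold B. rewrite Gd. split; intros E. apply app_inv_head in E. replace (j :: i :: y) with ((j :: i :: nil) ++ y) in E by auto. apply app_inv_tail in E. auto. rewrite E. auto. }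
  unfold mono.
  destruct (list_eq_dec Nat.eq_dec mid (i :: j :: nil)) as [M1|M1].
  - assert (g = A) by (apply EA; auto). assert (g <> B) by congruence.
    destruct (list_eq_dec Nat.eq_dec g A); [|congruence]. destruct (list_eq_dec Nat.eq_dec g B); [congruence|].
    destruct (Z.eq_dec m k); destruct (Z.eq_dec (m - k) 0); destruct (Z.eq_dec m (k + 1)); try lia; ceq.
  - destruct (list_eq_dec Nat.eq_dec mid (j :: i :: nil)) as [M2|M2].
    + assert (g = B) by (apply EB; auto). assert (g <> A) by congruence.
      destruct (list_eq_dec Nat.eq_dec g A); [congruence|]. destruct (list_eq_dec Nat.eq_dec g B); [|congruence].
      destruct (Z.eq_dec m k); destruct (Z.eq_dec (m - k) 1); destruct (Z.eq_dec m (k + 1)); try lia; ceq.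
    + assert (g <> A) by (intros E; apply M1, EA; auto). assert (g <> B) by (intros E; apply M2, EB; auto).
      destruct (list_eq_dec Nat.eq_dec g A); [congruence|]. destruct (list_eq_dec Nat.eq_dec g B); [congruence|].
      destruct Z.eq_dec; destruct Z.eq_dec; ceq.
Qed.

End Ideal.

Section Ker.
Variables (n : nat) (r : option R) (W : param -> Z -> word -> R).
Hypothesis HW : forall p, adm r p -> Wpos (W p).

Lemma bubble_aux d : forall a, (asc a <= d)%nat -> valid n a -> exists a0, valid n a0 /\ asc a0 = 0%nat /\
  (forall x, cocc a0 x = cocc a x) /\
  forall k al, InJ n r W (fun m g => Csub (mono k a al m g) (mono (k + Z.of_nat (asc a)) a0 al m g)).
Proof.
  assert (base : forall a, asc a = 0%nat -> valid n a -> exists a0, valid n a0 /\ asc a0 = 0%nat /\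
    (forall x, cocc a0 x = cocc a x) /\
    forall k al, InJ n r W (fun m g => Csub (mono k a al m g) (mono (k + Z.of_nat (asc a)) a0 al m g))).
  { intros a Ha Hv. exists a. repeat split; auto. intros k al. apply InJ_zero; auto.
    intros m g. rewrite Ha. replace (k + Z.of_nat 0)%Z with k by lia. ceq. }
  induction d; intros a Ha Hv.
  - apply base; auto; lia.
  - destruct (Nat.eq_dec (asc a) 0) as [E|E]. apply base; auto.
    destruct (ascent_exists a) as [x [i [j [y [Ea Hij]]]]]. lia.
    set (a' := x ++ j :: i :: y).
    pose proof (asc_swap x i j y) as Hs. rewrite <- Ea in Hs.
    rewrite (proj2 (Nat.ltb_ge j i)) in Hs by lia. rewrite (proj2 (Nat.ltb_lt i j)) in Hs by lia. fold a' in Hs.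
    assert (Hva : valid n x /\ valid n (i :: j :: y)) by (apply valid_app; rewrite <- Ea; auto).
    destruct Hva as [Hvx Hvr]. pose proof (Forall_inv Hvr) as Hi. pose proof (Forall_inv (Forall_inv_tail Hvr)) as Hj.
    pose proof (Forall_inv_tail (Forall_inv_tail Hvr)) as Hvy. simpl in Hi, Hj.
    assert (Hv' : valid n a') by (apply valid_app; split; auto; repeat constructor; auto).
    destruct (IHd a') as [a0 [Hv0 [Ha0 [Hc0 HJ]]]]; auto; try lia.
    exists a0. split; [|split; [|split]]; auto.
    + intros z. rewrite Hc0, Ea. unfold a'. rewrite !cocc_app. unfold cocc; simpl. repeat destruct Nat.eq_dec; lia.
    + intros k al. apply InJ_ext with (cadd (fun m g => Csub (mono k (x ++ i :: j :: y) al m g) (mono (k + 1) a' al m g))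
                                           (fun m g => Csub (mono (k + 1) a' al m g) (mono (k + 1 + Z.of_nat (asc a')) a0 al m g))).
      apply InJ_add; auto. apply gen_step; auto.
      intros m g. unfold cadd. rewrite <- Ea. replace (k + 1 + Z.of_nat (asc a'))%Z with (k + Z.of_nat (asc a))%Z by lia. ceq.
Qed.

Lemma NF_ex kap : exists a0, (exists b, valid n b /\ asc b = 0%nat /\ key n b = kap) -> valid n a0 /\ asc a0 = 0%nat /\ key n a0 = kap.
Proof.
  destruct (classic (exists b, valid n b /\ asc b = 0%nat /\ key n b = kap)) as [[b Hb]|H].
  exists b; auto. exists nil; intros; contradiction.
Qed.

Definition NF kap : word := proj1_sig (constructive_indefinite_description _ (NF_ex kap)).

Lemma NF_eq a0 : valid n a0 -> asc a0 = 0%nat -> a0 = NF (key n a0).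
Proof.
  intros Hv Ha. unfold NF. destruct constructive_indefinite_description as [b Hb]. simpl.
  destruct Hb as [Hb1 [Hb2 Hb3]]. exists a0; auto.
  apply uniq_asc0; auto. apply key_cocc with n; auto.
Qed.

Lemma toNF a k al : valid n a ->
  InJ n r W (fun m g => Csub (mono k a al m g) (mono (k + Z.of_nat (asc a)) (NF (key n a)) al m g)).
Proof.
  intros Hv. destruct (bubble_aux (asc a) a (le_n _) Hv) as [a0 [Hv0 [Ha0 [Hc0 HJ]]]].
  rewrite (NF_eq a0) in HJ; auto. rewrite (cocc_key n a0 a) in HJ; auto.
Qed.

Lemma mono_if_sum (l : list word) kap M b (f : word -> C) k a :
  sumC (fun z => if list_eq_dec Nat.eq_dec (key n z) kap then mono M b (f z) k a else C0) l =
  mono M b (sumC (fun z => if list_eq_dec Nat.eq_dec (key n z) kap then f z else C0) l) k a.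
Proof.
  unfold mono. destruct Z.eq_dec; [destruct list_eq_dec|]; auto.
  all: apply sumC_zero; intros; destruct list_eq_dec; auto.
Qed.

Lemma mono_C0 M b k a : mono M b C0 k a = C0.
Proof. unfold mono. destruct Z.eq_dec; [destruct list_eq_dec|]; auto. Qed.

Definition dec3 : forall x y : Z * list nat * nat, {x = y} + {x <> y}.
Proof. decide equality. apply Nat.eq_dec. decide equality. apply list_eq_dec, Nat.eq_dec. apply Z.eq_dec. Defined.

Definition inner (c : Coef) (R0 : Z * list nat * nat) (k : Z) (a : word) : C :=
  sumC (fun a' => if list_eq_dec Nat.eq_dec (key n a') (snd (fst R0))
       then mono (fst (fst R0) - Z.of_nat (asc a')) a' (c (fst (fst R0) - Z.of_nat (asc a'))%Z a') k a else C0)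
       (words n (snd R0)).

Definition yrep (c : Coef) (Reps : list (Z * list nat * nat)) : Coef := fun k a => sumC (fun R0 => inner c R0 k a) Reps.

Lemma yrep_InJ c Reps : (forall M kap L, phi n c M kap L = C0) -> InJ n r W (yrep c Reps).
Proof.
  intros Hphi. unfold yrep.
  apply InJ_ext with (fun k a => sumC (fun R0 => sumC (fun a' =>
     (if list_eq_dec Nat.eq_dec (key n a') (snd (fst R0)) then
        (fun m g => Csub (mono (fst (fst R0) - Z.of_nat (asc a')) a' (c (fst (fst R0) - Z.of_nat (asc a'))%Z a') m g)
                         (mono (fst (fst R0) - Z.of_nat (asc a') + Z.of_nat (asc a')) (NF (key n a')) (c (fst (fst R0) - Z.of_nat (asc a'))%Z a') m g))
      else czero) k a) (words n (snd R0))) Reps).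
  - apply InJ_sum. intros R0 _. apply InJ_sum. intros a' Ha'. destruct list_eq_dec.
    + apply toNF. eapply words_valid; eauto.
    + constructor.
  - intros k a. apply sumC_ext. intros R0 _. destruct R0 as [[M kap] L]. unfold inner. simpl.
    assert (E : forall a', (if list_eq_dec Nat.eq_dec (key n a') kap then mono (M - Z.of_nat (asc a')) a' (c (M - Z.of_nat (asc a'))%Z a') k a else C0)
       = Cadd ((if list_eq_dec Nat.eq_dec (key n a') kap then
        (fun m g => Csub (mono (M - Z.of_nat (asc a')) a' (c (M - Z.of_nat (asc a'))%Z a') m g)
                         (mono (M - Z.of_nat (asc a') + Z.of_nat (asc a')) (NF (key n a')) (c (M - Z.of_nat (asc a'))%Z a') m g))
      else czero) k a) (if list_eq_dec Nat.eq_dec (key n a') kap then mono M (NF kap) (c (M - Z.of_nat (asc a'))%Z a') k a else C0)).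
    { intros a'. destruct list_eq_dec; [|unfold czero; ceq]. subst kap.
      replace (M - Z.of_nat (asc a') + Z.of_nat (asc a'))%Z with M by lia. ceq. }
    rewrite (sumC_ext _ _ _ (fun a' _ => E a')). rewrite sumC_add.
    rewrite (mono_if_sum _ kap M (NF kap) (fun a' => c (M - Z.of_nat (asc a'))%Z a')).
    fold (phi n c M kap L). rewrite Hphi, mono_C0. ceq.
Qed.
End Ker.

Lemma inner_zero n c R0 k a : R0 <> ((k + Z.of_nat (asc a))%Z, key n a, length a) -> inner n c R0 k a = C0.
Proof.
  intros H. unfold inner. apply sumC_zero. intros a' Ha'. destruct list_eq_dec; auto. unfold mono.
  destruct Z.eq_dec; auto. destruct list_eq_dec; auto. subst a'. exfalso. apply H.
  destruct R0 as [[M kap] L]; simpl in *. apply In_words in Ha'. destruct Ha'. subst. repeat f_equal. lia.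
Qed.

Lemma inner_at n c k a : inner n c ((k + Z.of_nat (asc a))%Z, key n a, length a) k a =
  if in_dec (list_eq_dec Nat.eq_dec) a (words n (length a)) then c k a else C0.
Proof.
  unfold inner. simpl. destruct in_dec.
  - rewrite (sumC_single _ _ a); auto. destruct list_eq_dec; [|congruence]. unfold mono.
    replace (k + Z.of_nat (asc a) - Z.of_nat (asc a))%Z with k by lia.
    destruct Z.eq_dec; [|congruence]. destruct list_eq_dec; congruence.
    apply NoDup_words.
    intros a' _ Ha'. destruct list_eq_dec; auto. unfold mono. destruct Z.eq_dec; auto. destruct list_eq_dec; congruence.
  - apply (sumC_single_out _ _ a); auto. intros a' _ Ha'. destruct list_eq_dec; auto. unfold mono. destruct Z.eq_dec; auto. destruct list_eq_dec; congruence.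
Qed.

Lemma yrep_val n c Reps k a : NoDup Reps ->
  yrep n c Reps k a = if in_dec dec3 ((k + Z.of_nat (asc a))%Z, key n a, length a) Reps
                      then (if in_dec (list_eq_dec Nat.eq_dec) a (words n (length a)) then c k a else C0) else C0.
Proof.
  intros Hn. unfold yrep. destruct in_dec.
  - rewrite (sumC_single _ _ ((k + Z.of_nat (asc a))%Z, key n a, length a)); auto. apply inner_at.
    intros; apply inner_zero; auto.
  - eapply sumC_single_out; eauto. intros; apply inner_zero; auto.
Qed.

Lemma PS_tail n w c f N0 N' : Wpos w -> (forall k a, In (k, a) (box n N0) -> f k a = C0) ->
  (forall k a, Cnorm (f k a) <= Cnorm (c k a)) -> PS n w f N' <= Rmax 0 (PS n w c N' - PS n w c N0).
Proof.
  intros Hw Hf Hc. destruct (Nat.le_ge_cases N' N0).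
  - apply Rle_trans with 0; [|apply Rmax_l]. rewrite PS_box. rewrite sumR_zero; [lra|].
    intros [k a] Hx. simpl. rewrite Hf. rewrite Cnorm_C0; ring. eapply box_incl; eauto.
  - apply Rle_trans with (PS n w c N' - PS n w c N0); [|apply Rmax_r]. rewrite !PS_box.
    rewrite <- (sumR_ind_incl ZWdec _ (box n N0) (box n N')); auto using NoDup_box, box_incl.
    rewrite <- sumR_minus. apply sumR_le. intros [k a] Hx. cbn [fst snd]. destruct in_dec.
    + rewrite Hf; auto. rewrite Cnorm_C0. lra.
    + pose proof (Hc k a). pose proof (Hw k a). nra.
Qed.

Lemma PS_cauchy n w c Mb : Wpos w -> (forall N, PS n w c N <= Mb) ->
  forall eps, 0 < eps -> exists N0, forall N', (N0 <= N')%nat -> PS n w c N' - PS n w c N0 <= eps.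
Proof.
  intros Hw HM eps He.
  destruct (completeness (fun x => exists N, x = PS n w c N)) as [m [Hm1 Hm2]].
  - exists Mb. intros x [N ->]. auto.
  - exists (PS n w c 0). eauto.
  - destruct (classic (exists N0, m - eps < PS n w c N0)) as [[N0 HN0]|H].
    + exists N0. intros N' _. assert (PS n w c N' <= m) by (apply Hm1; eauto). lra.
    + exfalso. assert (m <= m - eps). { apply Hm2. intros x [N ->]. apply Rnot_lt_le. intros Hc. apply H. eauto. } lra.
Qed.

Section KerI.
Variables (n : nat) (r : option R) (W : param -> Z -> word -> R).
Hypothesis HW : forall p, adm r p -> Wpos (W p).

Lemma kerphi_InI c : InSp n r W c -> (forall M kap L, phi n c M kap L = C0) -> InI n r W c.
Proof.
  intros Hc Hphi. split; auto. intros p Hp eps He.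
  destruct (proj2 Hc p Hp) as [Mb HMb].
  destruct (PS_cauchy n (W p) c Mb (HW p Hp) HMb eps He) as [N0 HN0].
  set (Reps := nodup dec3 (map (fun ka => ((fst ka + Z.of_nat (asc (snd ka)))%Z, key n (snd ka), length (snd ka))) (box n N0))).
  assert (HR : NoDup Reps) by apply NoDup_nodup.
  exists (yrep n c Reps). split. apply yrep_InJ; auto.
  intros N'. eapply Rle_trans. apply (PS_tail n (W p) c _ N0 N'); auto.
  - intros k a Hka. unfold csub. rewrite yrep_val; auto.
    destruct in_dec as [_|Hn].
    + destruct in_dec as [_|Hn]. ceq. exfalso. apply Hn. apply In_box in Hka. apply In_words. tauto.
    + exfalso. apply Hn. apply nodup_In. apply in_map_iff. exists (k, a). auto.
  - intros k a. unfold csub. rewrite yrep_val; auto.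
    destruct in_dec; [destruct in_dec|].
    + replace (Csub (c k a) (c k a)) with C0 by ceq. rewrite Cnorm_C0. apply Cnorm_nonneg.
    + replace (Csub (c k a) C0) with (c k a) by ceq. lra.
    + replace (Csub (c k a) C0) with (c k a) by ceq. lra.
  - apply Rmax_lub. lra. destruct (Nat.le_ge_cases N0 N').
    apply HN0; auto. pose proof (PS_mono n (W p) c N' N0 (HW p Hp) H). lra.
Qed.

End KerI.

Lemma gen_len i j d s : i <> j -> length s <> 2%nat -> gen i j d s = C0.
Proof.
  intros H Hl. rewrite gen_val by auto. destruct list_eq_dec. subst; simpl in Hl; lia.
  destruct list_eq_dec; auto. subst; simpl in Hl; lia.
Qed.

Lemma gen_d i j d s : i <> j -> d <> 0%Z -> d <> 1%Z -> gen i j d s = C0.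
Proof.
  intros H H0 H1. rewrite gen_val by auto. destruct list_eq_dec. destruct Z.eq_dec; congruence.
  destruct list_eq_dec; auto. destruct Z.eq_dec; congruence.
Qed.

Lemma Cmul_C0_r x : Cmul x C0 = C0. Proof. ceq. Qed.
Lemma Cmul_C0_l x : Cmul C0 x = C0. Proof. ceq. Qed.

Lemma t_formula u i j t : i <> j -> IsProd u (gen i j) t -> forall m g, t m g =
  if Nat.leb 2 (length g) then
    Cadd (Cmul (u m (firstn (length g - 2) g)) (gen i j 0%Z (skipn (length g - 2) g)))
         (Cmul (u (m - 1)%Z (firstn (length g - 2) g)) (gen i j 1%Z (skipn (length g - 2) g)))
  else C0.
Proof.
  intros Hij H m g. specialize (H m g).
  eapply ZHasSum_uniq; [exact H|].
  set (x := firstn (length g - 2) g). set (s := skipn (length g - 2) g).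
  set (G := fun k => if Nat.leb 2 (length g) then Cmul (u k x) (gen i j (m - k)%Z s) else C0).
  apply ZHasSum_ext with G.
  { intros k. unfold G. destruct (Nat.leb_spec 2 (length g)).
    - symmetry. rewrite (sumC_single _ _ (length g - 2)%nat). auto. apply seq_NoDup. apply in_seq; lia.
      intros jj Hjj Hne. rewrite gen_len; auto. apply Cmul_C0_r. rewrite length_skipn. apply in_seq in Hjj. lia.
    - symmetry. apply sumC_zero. intros jj Hjj. rewrite gen_len; auto. apply Cmul_C0_r. rewrite length_skipn. apply in_seq in Hjj. lia. }
  apply ZHasSum_ext with (fun k => Cadd (if Z.eq_dec k m then G k else C0) (if Z.eq_dec k (m - 1) then G k else C0)).
  { intros k. unfold G. destruct Z.eq_dec; destruct Z.eq_dec; try lia.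
    - ceq.
    - ceq.
    - destruct Nat.leb. rewrite gen_d by lia. ceq. ceq. }
  replace (if Nat.leb 2 (length g) then _ else C0) with
    (Cadd ((fun k => if Z.eq_dec k m then G k else C0) m) ((fun k => if Z.eq_dec k (m - 1) then G k else C0) (m - 1)%Z)).
  apply ZHasSum_add; [apply (ZHasSum_single (fun k => if Z.eq_dec k m then G k else C0) m)|
    apply (ZHasSum_single (fun k => if Z.eq_dec k (m - 1) then G k else C0) (m - 1)%Z)]; intros k Hk; destruct Z.eq_dec; congruence.
  cbv beta. destruct Z.eq_dec; [|congruence]. destruct Z.eq_dec; [|congruence]. unfold G.
  replace (m - m)%Z with 0%Z by lia. replace (m - (m - 1))%Z with 1%Z by lia.
  change (match length g with S (S _) => true | _ => false end) with (Nat.leb 2 (length g)).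
  destruct (Nat.leb 2 (length g)); ceq.
Qed.

Lemma sumC_invol {A} (f : A -> C) (s : A -> A) l : NoDup l -> (forall x, In x l -> In (s x) l) ->
  (forall x, In x l -> s (s x) = x) -> sumC f l = sumC (fun x => f (s x)) l.
Proof.
  intros Hn Hin Hinv. rewrite <- (sumC_map f s l). apply sumC_perm. symmetry. apply Permutation_map_same_l.
  - apply FinFun.Injective_map_NoDup_in; auto. intros x y Hx Hy E. rewrite <- (Hinv x Hx), <- (Hinv y Hy), E. auto.
  - intros z Hz. apply in_map_iff in Hz. destruct Hz as [x [<- Hx]]. auto.
Qed.

Lemma sumC_opp {A} (f : A -> C) l : sumC (fun x => Copp (f x)) l = Copp (sumC f l).
Proof. induction l; simpl. ceq. rewrite IHl. ceq. Qed.

Lemma sumC_if {A} (b : bool) (f : A -> C) l : (if b then sumC f l else C0) = sumC (fun x => if b then f x else C0) l.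
Proof. destruct b; auto. symmetry; apply sumC_zero; auto. Qed.

Lemma pow2_ge m : INR m + 1 <= 2 ^ m.
Proof. induction m. simpl; lra. rewrite S_INR. change (2 ^ Datatypes.S m) with (2 * 2 ^ m). pose proof (pos_INR m). lra. Qed.

Lemma geom_small Cc eps : 0 <= Cc -> 0 < eps -> exists K : nat, forall m, (K <= m)%nat -> Cc / 2 ^ m <= eps.
Proof.
  intros HC He. destruct (archimed (Cc / eps)) as [H1 _].
  exists (Z.to_nat (up (Cc / eps))). intros m Hm.
  assert (INR m + 1 <= 2 ^ m) by apply pow2_ge.
  assert (Cc / eps <= INR m).
  { apply le_INR in Hm. destruct (Z_le_gt_dec 0 (up (Cc / eps))).
    - rewrite INR_IZR_INZ, Z2Nat.id in Hm by auto. lra.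
    - assert (Cc / eps >= 0) by (apply Rle_ge; unfold Rdiv; apply Rmult_le_pos; [lra|apply Rlt_le, Rinv_0_lt_compat; lra]). assert (Hg : (up (Cc / eps) < 0)%Z) by lia. apply IZR_lt in Hg. pose proof (pos_INR m). lra. }
  assert (0 < 2 ^ m) by (apply pow_lt; lra).
  apply Rmult_le_reg_r with (2 ^ m); auto. unfold Rdiv. rewrite Rmult_assoc, Rinv_l by lra.
  apply Rmult_le_reg_r with (/ eps). apply Rinv_0_lt_compat; auto.
  rewrite Rmult_1_r. replace (eps * 2 ^ m * / eps) with (2 ^ m) by (field; lra). fold (Cc / eps). lra.
Qed.

Section Tele.
Variable pr : C -> R.
Hypothesis Hpr : forall x, Rabs (pr x) <= Cnorm x.
Hypothesis Hsub : forall x y, pr (Csub x y) = pr x - pr y.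

Lemma tele_pos (Sq P : Z -> C) : (forall k, Sq k = Csub (P k) (P (k - 1)%Z)) ->
  (forall eps, 0 < eps -> exists K : nat, forall k, (Z.of_nat K <= Z.abs k)%Z -> Cnorm (P k) <= eps / 2) ->
  infinite_sum (fun k => pr (Sq (Z.of_nat k))) (- pr (P (-1)%Z)).
Proof.
  intros HS HP.
  assert (E : forall N, sum_f_R0 (fun k => pr (Sq (Z.of_nat k))) N = pr (P (Z.of_nat N)) - pr (P (-1)%Z)).
  { induction N; cbn [sum_f_R0]. rewrite HS, Hsub. replace (Z.of_nat 0 - 1)%Z with (-1)%Z by lia. auto. rewrite IHN, HS, Hsub.
    replace (Z.of_nat (S N) - 1)%Z with (Z.of_nat N) by lia. ring. }
  intros eps He. destruct (HP eps He) as [K HK]. exists K. intros m Hm. unfold R_dist. rewrite E.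
  replace (pr (P (Z.of_nat m)) - pr (P (-1)%Z) - - pr (P (-1)%Z)) with (pr (P (Z.of_nat m))) by ring.
  eapply Rle_lt_trans. apply Hpr. eapply Rle_lt_trans. apply HK. lia. lra.
Qed.

Lemma tele_neg (Sq P : Z -> C) : (forall k, Sq k = Csub (P k) (P (k - 1)%Z)) ->
  (forall eps, 0 < eps -> exists K : nat, forall k, (Z.of_nat K <= Z.abs k)%Z -> Cnorm (P k) <= eps / 2) ->
  infinite_sum (fun k => pr (Sq (- Z.of_nat (S k))%Z)) (pr (P (-1)%Z)).
Proof.
  intros HS HP.
  assert (E : forall N, sum_f_R0 (fun k => pr (Sq (- Z.of_nat (S k))%Z)) N = pr (P (-1)%Z) - pr (P (- Z.of_nat (S (S N)))%Z)).
  { induction N; cbn [sum_f_R0].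
    - rewrite HS, Hsub. replace (- Z.of_nat 1 - 1)%Z with (- Z.of_nat 2)%Z by lia. replace (- Z.of_nat 1)%Z with (-1)%Z by lia. auto.
    - rewrite IHN, HS, Hsub. replace (- Z.of_nat (S (S N)) - 1)%Z with (- Z.of_nat (S (S (S N))))%Z by lia. ring. }
  intros eps He. destruct (HP eps He) as [K HK]. exists K. intros m Hm. unfold R_dist. rewrite E.
  replace (pr (P (-1)%Z) - pr (P (- Z.of_nat (S (S m)))%Z) - pr (P (-1)%Z)) with (- pr (P (- Z.of_nat (S (S m)))%Z)) by ring.
  rewrite Rabs_Ropp. eapply Rle_lt_trans. apply Hpr. eapply Rle_lt_trans. apply HK. lia. lra.
Qed.
End Tele.

Lemma telescope (Sq P : Z -> C) L0 : (forall k, Sq k = Csub (P k) (P (k - 1)%Z)) ->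
  (forall eps, 0 < eps -> exists K : nat, forall k, (Z.of_nat K <= Z.abs k)%Z -> Cnorm (P k) <= eps) ->
  ZHasSum Sq L0 -> L0 = C0.
Proof.
  intros HS HP [L1 [L2 [[A1 A2] [[B1 B2] E]]]].
  assert (HP' : forall eps, 0 < eps -> exists K : nat, forall k, (Z.of_nat K <= Z.abs k)%Z -> Cnorm (P k) <= eps / 2).
  { intros eps He. apply HP. lra. }
  assert (Hf1 : forall x, Rabs (fst x) <= Cnorm x) by apply Cnorm_fst.
  assert (Hs1 : forall x, Rabs (snd x) <= Cnorm x) by apply Cnorm_snd.
  assert (Hf2 : forall x y, fst (Csub x y) = fst x - fst y) by (intros; unfold Csub, Cadd, Copp; simpl; ring).
  assert (Hs2 : forall x y, snd (Csub x y) = snd x - snd y) by (intros; unfold Csub, Cadd, Copp; simpl; ring).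
  pose proof (tele_pos fst Hf1 Hf2 Sq P HS HP') as T1. pose proof (tele_pos snd Hs1 Hs2 Sq P HS HP') as T2.
  pose proof (tele_neg fst Hf1 Hf2 Sq P HS HP') as T3. pose proof (tele_neg snd Hs1 Hs2 Sq P HS HP') as T4.
  pose proof (inf_sum_uniq _ _ _ A1 T1). pose proof (inf_sum_uniq _ _ _ A2 T2).
  pose proof (inf_sum_uniq _ _ _ B1 T3). pose proof (inf_sum_uniq _ _ _ B2 T4).
  subst. unfold Cadd, C0. apply C_ext; simpl; lra.
Qed.

Definition Tt (u v : Coef) (M : Z) (i j : nat) (k : Z) (a : word) (jj : nat) : C :=
  if Nat.leb 2 jj then Cmul (Cmul (u k (firstn (jj - 2) a)) (gen i j 0%Z (skipn (jj - 2) (firstn jj a))))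
                            (v (M - Z.of_nat (asc a) - k)%Z (skipn jj a)) else C0.
Definition Qt (u v : Coef) (M : Z) (i j : nat) (k : Z) (a : word) (jj : nat) : C :=
  if Nat.leb 2 jj then Cmul (Cmul (u (k - 1)%Z (firstn (jj - 2) a)) (gen i j 1%Z (skipn (jj - 2) (firstn jj a))))
                            (v (M - Z.of_nat (asc a) - k)%Z (skipn jj a)) else C0.

Lemma parts (X : word) (c1 c2 : nat) (Y : word) :
  firstn (length X + 2 - 2) (X ++ c1 :: c2 :: Y) = X /\
  skipn (length X + 2 - 2) (firstn (length X + 2) (X ++ c1 :: c2 :: Y)) = c1 :: c2 :: nil /\
  skipn (length X + 2) (X ++ c1 :: c2 :: Y) = Y.
Proof.
  replace (length X + 2 - 2)%nat with (length X) by lia.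
  split; [|split].
  - rewrite firstn_app, firstn_all, Nat.sub_diag, firstn_O, app_nil_r. auto.
  - rewrite firstn_app, (firstn_all2 X) by lia. replace (length X + 2 - length X)%nat with 2%nat by lia. simpl.
    rewrite skipn_app, skipn_all, Nat.sub_diag. auto.
  - rewrite skipn_app, skipn_all2 by lia. replace (length X + 2 - length X)%nat with 2%nat by lia. auto.
Qed.

Lemma QT_pt u v M i j k (X : word) (c1 c2 : nat) (Y : word) : (i < j)%nat ->
  Qt u v M i j k (X ++ c1 :: c2 :: Y) (length X + 2) = Copp (Tt u v M i j (k - 1) (X ++ c2 :: c1 :: Y) (length X + 2)).
Proof.
  intros Hij. unfold Qt, Tt. replace (Nat.leb 2 (length X + 2)) with true by (symmetry; apply Nat.leb_le; lia).
  destruct (parts X c1 c2 Y) as [E1 [E2 E3]]. destruct (parts X c2 c1 Y) as [F1 [F2 F3]].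
  rewrite E1, E2, E3, F1, F2, F3.
  assert (Hne : i <> j) by lia.
  rewrite !gen_val by auto.
  destruct (list_eq_dec Nat.eq_dec (c1 :: c2 :: nil) (j :: i :: nil)) as [E|E].
  - injection E; intros; subst c1 c2.
    destruct (list_eq_dec Nat.eq_dec (j :: i :: nil) (i :: j :: nil)) as [G|G]. injection G; intros; lia.
    destruct (list_eq_dec Nat.eq_dec (i :: j :: nil) (i :: j :: nil)) as [_|G']; [|congruence].
    destruct (Z.eq_dec 1 1); [|congruence]. destruct (Z.eq_dec 0 0); [|congruence].
    assert (Hs : asc (X ++ i :: j :: Y) = (asc (X ++ j :: i :: Y) + 1)%nat)
      by (pose proof (asc_swap X j i Y); destruct (Nat.ltb_spec i j); destruct (Nat.ltb_spec j i); lia).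
    replace (M - Z.of_nat (asc (X ++ i :: j :: Y)) - (k - 1))%Z with (M - Z.of_nat (asc (X ++ j :: i :: Y)) - k)%Z by lia.
    ceq.
  - destruct (list_eq_dec Nat.eq_dec (c2 :: c1 :: nil) (i :: j :: nil)) as [G|G].
    { injection G; intros H1 H2; exfalso; apply E; rewrite H1, H2; reflexivity. }
    repeat match goal with |- context [list_eq_dec ?d ?x ?y] => destruct (list_eq_dec d x y) end;
    repeat match goal with |- context [Z.eq_dec ?x ?y] => destruct (Z.eq_dec x y) end; try lia; try congruence; ceq.
Qed.

Lemma Cnorm_gen i j d s : i <> j -> Cnorm (gen i j d s) <= 1.
Proof.
  intros H. rewrite gen_val by auto.
  repeat (destruct list_eq_dec || destruct Z.eq_dec); rewrite ?Cnorm_opp, ?Cnorm_C1, ?Cnorm_C0; lra.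
Qed.

Definition DecayW (r : option R) (W : param -> Z -> word -> R) :=
  exists p sg, adm r p /\ 0 < sg /\ forall k a, 2 ^ Z.abs_nat k * sg ^ length a <= W p k a.

Lemma Sp_bound n r W p sg u : adm r p -> 0 < sg -> (forall k a, 2 ^ Z.abs_nat k * sg ^ length a <= W p k a) ->
  InSp n r W u -> exists B, 0 <= B /\ forall k a, Cnorm (u k a) * (2 ^ Z.abs_nat k * sg ^ length a) <= B.
Proof.
  intros Hp Hs HW [Hu1 Hu2]. destruct (Hu2 p Hp) as [B HB].
  assert (Hpos : Wpos (W p)). { intros k a. eapply Rle_trans; [|apply HW]. apply Rmult_le_pos; apply pow_le; lra. }
  exists B. split. eapply Rle_trans. apply (PS_nonneg n (W p) u 0 Hpos). apply HB.
  intros k a. destruct (classic (valid n a)) as [Hv|Hv].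
  - destruct (box_exists n k a Hv) as [N HN]. eapply Rle_trans; [|apply (HB N)].
    eapply Rle_trans; [|apply PS_term; eauto]. apply Rmult_le_compat_l. apply Cnorm_nonneg. apply HW.
  - rewrite Hu1, Cnorm_C0 by auto. pose proof (PS_nonneg n (W p) u 0 Hpos). pose proof (HB 0%nat). lra.
Qed.

Lemma swap_words n L p a : In a (words n L) -> In (swap2 p a) (words n L).
Proof.
  intros H. apply In_words in H. destruct H as [Hv Hl]. apply In_words. split.
  apply valid_cocc_transfer with a; auto. intros; symmetry; apply swap2_cocc.
  rewrite swap2_length; auto.
Qed.

Lemma sumC_if_dec {A} {P Q : Prop} (b : {P} + {Q}) (f : A -> C) l :
  (if b then sumC f l else C0) = sumC (fun x => if b then f x else C0) l.
Proof. destruct b; auto. symmetry; apply sumC_zero; auto. Qed.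

Lemma phi_prod n r W u v t w i j : DecayW r W -> InSp n r W u -> InSp n r W v -> (i < j)%nat ->
  IsProd u (gen i j) t -> IsProd t v w -> forall M kap L, phi n w M kap L = C0.
Proof.
  intros HD Hu Hv Hij Ht Hw M kap L.
  assert (Hne : i <> j) by lia.
  set (Pk := fun k => sumC (fun jj => sumC (fun a => if list_eq_dec Nat.eq_dec (key n a) kap then Tt u v M i j k a jj else C0) (words n L)) (seq 0 (S L))).
  set (Sq := fun k => sumC (fun a => if list_eq_dec Nat.eq_dec (key n a) kap then
      sumC (fun jj => Cmul (t k (firstn jj a)) (v (M - Z.of_nat (asc a) - k)%Z (skipn jj a))) (seq 0 (S (length a))) else C0) (words n L)).
  assert (HS : ZHasSum Sq (phi n w M kap L)).
  { unfold Sq, phi. apply (ZHasSum_sumC (fun a k => if list_eq_dec Nat.eq_dec (key n a) kap then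
      sumC (fun jj => Cmul (t k (firstn jj a)) (v (M - Z.of_nat (asc a) - k)%Z (skipn jj a))) (seq 0 (S (length a))) else C0)).
    intros a Ha. destruct list_eq_dec. apply (Hw (M - Z.of_nat (asc a))%Z a). apply ZHasSum_zero; auto. }
  assert (Hdiff : forall k, Sq k = Csub (Pk k) (Pk (k - 1)%Z)).
  { intros k. unfold Sq, Pk.
    transitivity (Cadd (sumC (fun a => sumC (fun jj => if list_eq_dec Nat.eq_dec (key n a) kap then Tt u v M i j k a jj else C0) (seq 0 (S L))) (words n L))
                       (sumC (fun a => sumC (fun jj => if list_eq_dec Nat.eq_dec (key n a) kap then Qt u v M i j k a jj else C0) (seq 0 (S L))) (words n L))).
    { rewrite <- sumC_add. apply sumC_ext. intros a Ha. rewrite <- sumC_add.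
      apply In_words in Ha. destruct Ha as [Hva Hla]. rewrite sumC_if_dec. rewrite Hla. apply sumC_ext. intros jj Hjj.
      apply in_seq in Hjj. destruct list_eq_dec; [|ceq].
      rewrite (t_formula u i j t Hne Ht). rewrite length_firstn. replace (Nat.min jj (length a)) with jj by lia.
      rewrite firstn_firstn. replace (Nat.min (jj - 2) jj) with (jj - 2)%nat by lia.
      unfold Tt, Qt. destruct (Nat.leb 2 jj); ceq. }
    rewrite (sumC_swap (fun a jj => if list_eq_dec Nat.eq_dec (key n a) kap then Tt u v M i j k a jj else C0)).
    rewrite (sumC_swap (fun a jj => if list_eq_dec Nat.eq_dec (key n a) kap then Qt u v M i j k a jj else C0)).
    unfold Csub. f_equal. rewrite <- sumC_opp. apply sumC_ext. intros jj Hjj. apply in_seq in Hjj.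
    destruct (Nat.leb_spec 2 jj).
    - rewrite (sumC_invol (fun a => if list_eq_dec Nat.eq_dec (key n a) kap then Tt u v M i j (k - 1) a jj else C0) (swap2 (jj - 2)));
        [|apply NoDup_words|intros; apply swap_words; auto|intros; apply swap2_invol].
      rewrite <- sumC_opp. apply sumC_ext. intros a Ha.
      apply In_words in Ha. destruct Ha as [Hva Hla].
      assert (Hsp : (jj - 2 + 2 <= length a)%nat) by lia.
      destruct (split_at (jj - 2) a Hsp) as [Ea La].
      set (X := firstn (jj - 2) a) in *. set (c1 := nth (jj - 2) a 0%nat) in *. set (c2 := nth (S (jj - 2)) a 0%nat) in *.
      set (Y := skipn (S (S (jj - 2))) a) in *.
      assert (Ejj : jj = (length X + 2)%nat) by lia.
      assert (Esw : swap2 (jj - 2) a = X ++ c2 :: c1 :: Y). { rewrite Ea at 1. rewrite <- La. apply swap2_eq. }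
      rewrite Esw. assert (Hk : key n (X ++ c2 :: c1 :: Y) = key n a).
      { rewrite <- Esw. apply cocc_key. apply swap2_cocc. }
      rewrite Hk. destruct list_eq_dec; [|ceq].
      rewrite Ea at 1. rewrite Ejj. rewrite QT_pt by auto. auto.
    - rewrite sumC_zero. rewrite sumC_zero. ceq.
      intros a _. unfold Tt. destruct (Nat.leb_spec 2 jj); [lia|]. destruct list_eq_dec; auto.
      intros a _. unfold Qt. destruct (Nat.leb_spec 2 jj); [lia|]. destruct list_eq_dec; auto. }
  apply (telescope Sq Pk _ Hdiff); auto.
  destruct HD as [p [sg [Hp [Hsg HWd]]]].
  destruct (Sp_bound n r W p sg u Hp Hsg HWd Hu) as [Bu [HBu Bu']].
  destruct (Sp_bound n r W p sg v Hp Hsg HWd Hv) as [Bv [HBv Bv']].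
  set (cc := fun (jj : nat) (a : word) => (Bu * / sg ^ length (firstn (jj - 2) a)) * (Bv * / sg ^ length (skipn jj a))).

  assert (Hcc : forall jj a, 0 <= cc jj a).
  { intros. unfold cc. assert (forall m, 0 < sg ^ m) by (intros; apply pow_lt; auto).
    apply Rmult_le_pos; apply Rmult_le_pos; auto; apply Rlt_le, Rinv_0_lt_compat; auto. }
  set (Ctot := sumR (fun jj => sumR (fun a => cc jj a) (words n L)) (seq 0 (S L))).
  assert (HC : forall k, Cnorm (Pk k) * 2 ^ Z.abs_nat k <= Ctot).
  { intros k. unfold Pk, Ctot. eapply Rle_trans. apply Rmult_le_compat_r. apply pow_le; lra.
    eapply Rle_trans. apply Cnorm_sumC. apply sumR_le. intros jj _. apply Cnorm_sumC.
    rewrite Rmult_comm, <- sumR_scal. apply sumR_le. intros jj _. rewrite <- sumR_scal. apply sumR_le. intros a _.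
    destruct list_eq_dec; [|rewrite Cnorm_C0; rewrite Rmult_0_r; apply Hcc].
    unfold Tt. destruct (Nat.leb 2 jj); [|rewrite Cnorm_C0; rewrite Rmult_0_r; apply Hcc].
    rewrite !Cnorm_mul. set (x := firstn (jj - 2) a). set (y := skipn jj a).
    set (l := (M - Z.of_nat (asc a) - k)%Z).
    pose proof (Bu' k x) as B1. pose proof (Bv' l y) as B2.
    pose proof (Cnorm_gen i j 0%Z (skipn (jj - 2) (firstn jj a)) Hne) as B3.
    assert (P1 : 0 < sg ^ length x) by (apply pow_lt; auto). assert (P2 : 0 < sg ^ length y) by (apply pow_lt; auto).
    assert (P3 : 1 <= 2 ^ Z.abs_nat l) by (apply pow_R1_Rle; lra).
    assert (P4 : 0 < 2 ^ Z.abs_nat k) by (apply pow_lt; lra).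
    assert (C1' : Cnorm (u k x) * 2 ^ Z.abs_nat k <= Bu * / sg ^ length x).
    { apply Rmult_le_reg_r with (sg ^ length x); auto. replace (Bu * / sg ^ length x * sg ^ length x) with Bu by (field; lra). rewrite Rmult_assoc. lra. }
    assert (C2' : Cnorm (v l y) <= Bv * / sg ^ length y).
    { apply Rmult_le_reg_r with (sg ^ length y); auto. replace (Bv * / sg ^ length y * sg ^ length y) with Bv by (field; lra).
      pose proof (Cnorm_nonneg (v l y)). assert (0 <= Cnorm (v l y) * sg ^ length y) by (apply Rmult_le_pos; lra). nra. }
    unfold cc. fold x y.
    pose proof (Cnorm_nonneg (u k x)). pose proof (Cnorm_nonneg (v l y)).
    pose proof (Cnorm_nonneg (gen i j 0%Z (skipn (jj - 2) (firstn jj a)))).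
    replace (2 ^ Z.abs_nat k * (Cnorm (u k x) * Cnorm (gen i j 0%Z (skipn (jj - 2) (firstn jj a))) * Cnorm (v l y)))
      with ((Cnorm (u k x) * 2 ^ Z.abs_nat k) * (Cnorm (gen i j 0%Z (skipn (jj - 2) (firstn jj a))) * Cnorm (v l y))) by ring.
    apply Rmult_le_compat; try nra. }
  intros eps He. assert (HCt : 0 <= Ctot) by (apply sumR_nonneg; intros; apply sumR_nonneg; auto).
  destruct (geom_small Ctot eps HCt He) as [K HK]. exists K. intros k Hk.
  assert (P4 : 0 < 2 ^ Z.abs_nat k) by (apply pow_lt; lra).
  eapply Rle_trans; [|apply (HK (Z.abs_nat k)); lia].
  apply Rmult_le_reg_r with (2 ^ Z.abs_nat k); auto. unfold Rdiv. rewrite Rmult_assoc, Rinv_l, Rmult_1_r by lra. auto.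
Qed.

Lemma phi_add n c d M kap L : phi n (cadd c d) M kap L = Cadd (phi n c M kap L) (phi n d M kap L).
Proof. unfold phi, cadd. rewrite <- sumC_add. apply sumC_ext. intros. destruct list_eq_dec; auto. ceq. Qed.

Lemma phi_sub n c d M kap L : phi n (csub c d) M kap L = Csub (phi n c M kap L) (phi n d M kap L).
Proof. unfold phi, csub. rewrite <- sumC_sub. apply sumC_ext. intros. destruct list_eq_dec; auto. ceq. Qed.

Lemma phi_ext n c d M kap L : (forall k a, c k a = d k a) -> phi n c M kap L = phi n d M kap L.
Proof. intros H. unfold phi. apply sumC_ext. intros. rewrite H. auto. Qed.

Lemma phi_J n r W y : DecayW r W -> InJ n r W y -> forall M kap L, phi n y M kap L = C0.
Proof.
  intros HD H. induction H as [|x u v t w i j y Hx IH Hu Hv Hij Hjn Ht Hw Hy]; intros M kap L.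
  - unfold phi, czero. apply sumC_zero. intros. destruct list_eq_dec; auto.
  - rewrite (phi_ext n y (cadd x w)) by (intros; unfold cadd; auto).
    rewrite phi_add, IH, (phi_prod n r W u v t w i j HD Hu Hv Hij Ht Hw). ceq.
Qed.

Lemma phi_I n r W c : DecayW r W -> InI n r W c -> forall M kap L, phi n c M kap L = C0.
Proof.
  intros HD [Hc HI] M kap L.
  destruct HD as [p [sg [Hp [Hsg HWd]]]] eqn:EHD.
  assert (Hpos : Wpos (W p)). { intros k a. eapply Rle_trans; [|apply HWd]. apply Rmult_le_pos; apply pow_le; lra. }
  set (wk := fun a : word => 2 ^ Z.abs_nat (M - Z.of_nat (asc a))%Z * sg ^ length a).
  assert (Hwk : forall a, 0 < wk a) by (intros; unfold wk; apply Rmult_lt_0_compat; apply pow_lt; lra).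
  set (Kc := sumR (fun a => / wk a) (words n L)).
  assert (HKc : 0 <= Kc) by (apply sumR_nonneg; intros; apply Rlt_le, Rinv_0_lt_compat; auto).
  assert (Hb : forall eps, 0 < eps -> Cnorm (phi n c M kap L) <= eps * Kc).
  { intros eps He. destruct (HI p Hp eps He) as [y [Hy HPS]].
    assert (E : phi n c M kap L = phi n (csub c y) M kap L).
    { rewrite phi_sub, (phi_J n r W y); auto. ceq. }
    rewrite E. unfold phi. eapply Rle_trans. apply Cnorm_sumC. unfold Kc. rewrite <- sumR_scal.
    apply sumR_le. intros a Ha. destruct list_eq_dec; [|rewrite Cnorm_C0; apply Rmult_le_pos; [lra|apply Rlt_le, Rinv_0_lt_compat; auto]].
    assert (Hv : valid n a) by (eapply words_valid; eauto).
    destruct (box_exists n (M - Z.of_nat (asc a))%Z a Hv) as [N HN].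
    pose proof (PS_term n (W p) (csub c y) N _ _ Hpos HN) as T. pose proof (HPS N).
    pose proof (HWd (M - Z.of_nat (asc a))%Z a). fold (wk a) in H0.
    pose proof (Cnorm_nonneg (csub c y (M - Z.of_nat (asc a))%Z a)).
    assert (Cnorm (csub c y (M - Z.of_nat (asc a))%Z a) * wk a <= eps).
    { eapply Rle_trans; [|apply H]. eapply Rle_trans; [|apply T]. apply Rmult_le_compat_l; auto. }
    apply Rmult_le_reg_r with (wk a); auto. rewrite Rmult_assoc, Rinv_l, Rmult_1_r by (pose proof (Hwk a); lra). auto. }
  apply Cnorm_zero. destruct (Rle_dec (Cnorm (phi n c M kap L)) 0) as [H|H]; auto.
  exfalso. set (z := Cnorm (phi n c M kap L)) in *.
  assert (z > 0) by lra.
  pose proof (Hb (z / (Kc + 1))). assert (0 < z / (Kc + 1)) by (apply Rdiv_lt_0_compat; lra).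
  specialize (H1 H2). unfold Rdiv in H1.
  assert (z * / (Kc + 1) * Kc < z). { apply Rmult_lt_reg_r with (Kc + 1). lra. field_simplify; lra. }
  lra.
Qed.

Lemma wFT_pos r p : adm r p -> Wpos (wFT p).
Proof.
  destruct p as [[rho sg] tau]. intros [H1 [H2 [H3 H4]]] k a. simpl.
  apply Rmult_le_pos; apply pow_le; lra.
Qed.

Lemma wF_pos r p : adm r p -> Wpos (wF p).
Proof.
  destruct p as [[rho sg] tau]. intros [H1 [H2 [H3 H4]]] k a. simpl.
  apply Rmult_le_pos; [apply Rmult_le_pos|]; apply pow_le; lra.
Qed.

Lemma wFT_le r p k a : adm r p -> wFT p k a <= wF p k a.
Proof.
  destruct p as [[rho sg] tau]. intros [H1 [H2 [H3 H4]]]. simpl.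
  assert (0 <= rho ^ Z.abs_nat k * sg ^ length a) by (apply Rmult_le_pos; apply pow_le; lra).
  assert (1 <= tau ^ splus1 a) by (apply pow_R1_Rle; lra). nra.
Qed.

Definition sg0 (r : option R) : R := match r with Some x => x / 2 | None => 1 end.

Lemma adm0 r : (forall x, r = Some x -> 0 < x) -> adm r (2, sg0 r, 1) /\ 0 < sg0 r.
Proof.
  intros hr. destruct r as [x|]; simpl.
  - specialize (hr x eq_refl). repeat split; lra.
  - repeat split; lra.
Qed.

Lemma Decay_wF r : (forall x, r = Some x -> 0 < x) -> DecayW r wF.
Proof.
  intros hr. destruct (adm0 r hr) as [Ha Hs]. exists (2, sg0 r, 1), (sg0 r). split; auto. split; auto.
  intros k a. simpl. rewrite pow1. lra.
Qed.

Lemma Decay_wFT r : (forall x, r = Some x -> 0 < x) -> DecayW r wFT.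
Proof.
  intros hr. destruct (adm0 r hr) as [Ha Hs]. exists (2, sg0 r, 1), (sg0 r). split; auto. split; auto.
  intros k a. simpl. lra.
Qed.

Lemma Sp_FT n r c : InSp n r wF c -> InSp n r wFT c.
Proof.
  intros [H1 H2]. split; auto. intros p Hp. destruct (H2 p Hp) as [M HM]. exists M. intros N.
  eapply Rle_trans; [|apply (HM N)]. apply PS_le. intros k a _. apply Rmult_le_compat_l. apply Cnorm_nonneg.
  apply (wFT_le r); auto.
Qed.

Lemma J_FT n r y : InJ n r wF y -> InJ n r wFT y.
Proof.
  induction 1 as [|x u v t w i j y Hx IH Hu Hv Hij Hjn Ht Hw Hy]. constructor.
  apply (JS n r wFT x u v t w i j); auto; apply Sp_FT; auto.
Qed.

Lemma PS_FT n r p c N : adm r p -> PS n (wFT p) c N <= PS n (wF p) c N.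
Proof. intros Hp. apply PS_le. intros k a _. apply Rmult_le_compat_l. apply Cnorm_nonneg. apply (wFT_le r); auto. Qed.

Lemma I_FT n r c : InI n r wF c -> InI n r wFT c.
Proof.
  intros [Hc HI]. split. apply Sp_FT; auto. intros p Hp eps He. destruct (HI p Hp eps He) as [y [Hy HP]].
  exists y. split. apply J_FT; auto. intros N. eapply Rle_trans. apply (PS_FT n r); auto. auto.
Qed.

Lemma Sp_add n r W c d : (forall p, adm r p -> Wpos (W p)) -> InSp n r W c -> InSp n r W d -> InSp n r W (cadd c d).
Proof.
  intros HW [H1 H2] [G1 G2]. split.
  - intros k a Ha. unfold cadd. rewrite H1, G1 by auto. ceq.
  - intros p Hp. destruct (H2 p Hp) as [M HM]. destruct (G2 p Hp) as [M' HM']. exists (M + M'). intros N.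
    eapply Rle_trans. apply PS_add. apply HW; auto. pose proof (HM N). pose proof (HM' N). lra.
Qed.

Lemma Sp_sub n r W c d : (forall p, adm r p -> Wpos (W p)) -> InSp n r W c -> InSp n r W d -> InSp n r W (csub c d).
Proof.
  intros HW [H1 H2] [G1 G2]. split.
  - intros k a Ha. unfold csub. rewrite H1, G1 by auto. ceq.
  - intros p Hp. destruct (H2 p Hp) as [M HM]. destruct (G2 p Hp) as [M' HM']. exists (M + M'). intros N.
    eapply Rle_trans. apply PS_sub. apply HW; auto. pose proof (HM N). pose proof (HM' N). lra.
Qed.

Lemma Rmap_InSp n r d : InSp n r wFT d -> InSp n r wF (Rmap n d).
Proof.
  intros [H1 H2]. split.
  - intros k w' Hw'. unfold Rmap. apply sumC_zero. intros w Hw. destruct list_eq_dec; auto.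
    exfalso. apply Hw'. rewrite <- e. apply Rw_valid. eapply words_valid; eauto.
  - intros p Hp. destruct (H2 p Hp) as [M HM]. destruct p as [[rho sg] tau]. destruct Hp as [A1 [A2 [A3 A4]]].
    exists (tau ^ (Kb n + 1) * M). intros N. eapply Rle_trans. apply Rmap_PS; auto.
    apply Rmult_le_compat_l. apply pow_le; lra. auto.
Qed.

Theorem theorem8p8 (n : nat) (r : option R) (hr : forall x, r = Some x -> 0 < x) :
  (forall c, InSp n r wF c -> InSp n r wFT c) /\
  (forall c, InI n r wF c -> InI n r wFT c) /\
  (forall c, InSp n r wF c -> InI n r wFT c -> InI n r wF c) /\
  (forall b, InSp n r wFT b -> exists a, InSp n r wF a /\ InI n r wFT (csub b a)) /\
  (forall q, adm r q -> exists p C, adm r p /\ 0 < C /\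
     forall c M, InSp n r wF c -> QB n r wF p c M -> QB n r wFT q c (C * M)) /\
  (forall p, adm r p -> exists q C, adm r q /\ 0 < C /\
     forall c M, InSp n r wF c -> QB n r wFT q c M -> QB n r wF p c (C * M)).
Proof.
  assert (HWF : forall p, adm r p -> Wpos (wF p)) by (intros; eapply wF_pos; eauto).
  assert (HWT : forall p, adm r p -> Wpos (wFT p)) by (intros; eapply wFT_pos; eauto).
  pose proof (Decay_wF r hr) as DF. pose proof (Decay_wFT r hr) as DT.
  split; [|split; [|split; [|split; [|split]]]].
  - apply Sp_FT.
  - apply I_FT.
  - intros c Hc HI. apply kerphi_InI; auto. apply (phi_I n r wFT); auto.
  - intros b Hb. exists (Rmap n b). split. apply Rmap_InSp; auto.
    apply kerphi_InI; auto. apply Sp_sub; auto. apply Sp_FT, Rmap_InSp; auto.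
    intros M kap L. rewrite phi_sub, Rmap_phi. ceq.
  - intros q Hq. exists q, 1. split; auto. split; [lra|]. intros c M Hc HQ eps He.
    destruct (HQ eps He) as [x [Hx HP]]. exists x. split. apply I_FT; auto.
    intros N. eapply Rle_trans. apply (PS_FT n r); auto. rewrite Rmult_1_l. auto.
  - intros p Hp. exists p, ((snd p) ^ (Kb n + 1)).
    destruct p as [[rho sg] tau]. pose proof Hp as Hp'. destruct Hp' as [A1 [A2 [A3 A4]]]. simpl snd.
    assert (HC : 0 < tau ^ (Kb n + 1)) by (apply pow_lt; lra).
    split; auto. split; auto. intros c M Hc HQ eps He.
    destruct (HQ (eps / tau ^ (Kb n + 1))) as [x [Hx HP]]. apply Rdiv_lt_0_compat; auto.
    set (d := cadd c x). set (a := Rmap n d).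
    assert (Hd : InSp n r wFT d) by (apply Sp_add; auto; [apply Sp_FT; auto | destruct Hx; auto]).
    assert (Ha : InSp n r wF a) by (apply Rmap_InSp; auto).
    exists (csub a c). split.
    + apply kerphi_InI; auto. apply Sp_sub; auto. intros M' kap L.
      rewrite phi_sub. unfold a. rewrite Rmap_phi. unfold d. rewrite phi_add.
      rewrite (phi_I n r wFT x DT Hx). ceq.
    + intros N. rewrite (PS_ext n _ (cadd c (csub a c)) a) by (intros; unfold cadd, csub; ceq).
      eapply Rle_trans. apply Rmap_PS; auto.
      specialize (HP N). fold d in HP.
      replace (tau ^ (Kb n + 1) * M + eps) with (tau ^ (Kb n + 1) * (M + eps / tau ^ (Kb n + 1))) by (field; lra).
      apply Rmult_le_compat_l; lra.
Qed.
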